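(* Let $d\ge1$, $\boldsymbol k\in\mathbb Z^d$, $x>0$, $\boldsymbol y\in\mathbb R_+^d$, $\phi\in\mathbb R$. Then $$J_{\boldsymbol k}(\boldsymbol y;2\pi x,\phi)=\frac1{2\pi}\sum_{m\in\mathbb Z}e^{im\phi}j_{(0,m)}(xy_1\cdots y_d)\prod_{l=1}^dj_{(0,k_l+m)}(xy_l^{-1}),$$ the series being absolutely convergent.
   Context: $j_{(0,m)}(x)=2\pi i^mJ_m(4\pi x)$ with $J_m$ the classical $J$-Bessel function. $\Theta_{\boldsymbol k}(\boldsymbol\theta,\boldsymbol y;x,\phi)=2xy_1\cdots y_d\cos(\sum_{l=1}^d\theta_l+\phi)+\sum_{l=1}^d(k_l\theta_l+2xy_l^{-1}\cos\theta_l)$ and $J_{\boldsymbol k}(\boldsymbol y;x,\phi)=\int_{[0,2\pi]^d}e^{i\Theta_{\boldsymbol k}(\boldsymbol\theta,\boldsymbol y;x,\phi)}d\boldsymbol\theta$. *)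

(* Defs.v *)
From Stdlib Require Import Reals ZArith Arith.
From Coquelicot Require Import Coquelicot.
Open Scope R_scope.

Definition cis (t : R) : C := (cos t, sin t).

Definition Cpowz (z : C) (m : Z) : C :=
  if (0 <=? m)%Z then Cpow z (Z.to_nat m) else Cinv (Cpow z (Z.to_nat (- m))).

Definition besselJ_nat (n : nat) (z : R) : R :=
  Series (fun k => (-1) ^ k / (INR (fact k) * INR (fact (k + n))) * (z / 2) ^ (2 * k + n)).

Definition besselJ (m : Z) (z : R) : R :=
  if (0 <=? m)%Z then besselJ_nat (Z.to_nat m) z
  else (-1) ^ (Z.to_nat (- m)) * besselJ_nat (Z.to_nat (- m)) z.

Definition j0 (m : Z) (x : R) : C :=
  Cmult (RtoC (2 * PI)) (Cmult (Cpowz Ci m) (RtoC (besselJ m (4 * PI * x)))).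

(* Iterated Riemann integral over [0,2pi]^d of f : (nat -> R) -> R, where the
   point theta of [0,2pi]^d is encoded by its coordinates theta 0, ..., theta (d-1). *)
Fixpoint cube_int (d : nat) (f : (nat -> R) -> R) : R :=
  match d with
  | O => f (fun _ => 0)
  | S d' => RInt (fun t => cube_int d'
                   (fun th => f (fun i => if Nat.eqb i d' then t else th i))) 0 (2 * PI)
  end.

Fixpoint sumd (d : nat) (a : nat -> R) : R :=
  match d with O => 0 | S d' => sumd d' a + a d' end.
Fixpoint prodd (d : nat) (a : nat -> R) : R :=
  match d with O => 1 | S d' => prodd d' a * a d' end.
Fixpoint Cprodd (d : nat) (a : nat -> C) : C :=
  match d with O => RtoC 1 | S d' => Cmult (Cprodd d' a) (a d') end.

Definition Theta (d : nat) (k : nat -> Z) (th y : nat -> R) (x phi : R) : R :=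
  2 * x * prodd d y * cos (sumd d th + phi)
  + sumd d (fun l => IZR (k l) * th l + 2 * x * / y l * cos (th l)).

Definition Jk (d : nat) (k : nat -> Z) (y : nat -> R) (x phi : R) : C :=
  (cube_int d (fun th => cos (Theta d k th y x phi)),
   cube_int d (fun th => sin (Theta d k th y x phi))).

(* Absolute convergence of a Z-indexed complex series, and its sum
   (sum over m >= 0 plus sum over m <= -1). *)
Definition abs_summable_Z (a : Z -> C) : Prop :=
  ex_series (fun n : nat => Cmod (a (Z.of_nat n))) /\
  ex_series (fun n : nat => Cmod (a (- Z.of_nat (S n))%Z)).

Definition is_sum_Z (a : Z -> C) (s : C) : Prop :=
  exists s1 s2 : C,
    is_series (V := C_NormedModule) (fun n : nat => a (Z.of_nat n)) s1 /\
    is_series (V := C_NormedModule) (fun n : nat => a (- Z.of_nat (S n))%Z) s2 /\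
    s = Cplus s1 s2.

(* Main.v *)
Require Import Defs.
From Stdlib Require Import Reals ZArith.
From Coquelicot Require Import Coquelicot.
From Stdlib Require Import Arith Lia Lra FunctionalExtensionality.
Open Scope R_scope.

Fixpoint cs (n : nat) (f : nat -> C) : C :=
  match n with O => RtoC 0 | S n' => Cplus (cs n' f) (f n') end.
Fixpoint rs (n : nat) (f : nat -> R) : R :=
  match n with O => 0 | S n' => rs n' f + f n' end.

Lemma cs_ext n f g : (forall i, (i < n)%nat -> f i = g i) -> cs n f = cs n g.
Proof. induction n; intros H; simpl; auto. rewrite IHn, H; auto. Qed.
Lemma rs_ext n f g : (forall i, (i < n)%nat -> f i = g i) -> rs n f = rs n g.
Proof. induction n; intros H; simpl; auto. rewrite IHn, H; auto. Qed.
Lemma cs_plus n f g : cs n (fun i => Cplus (f i) (g i)) = Cplus (cs n f) (cs n g).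
Proof. induction n; simpl. apply injective_projections; simpl; ring. rewrite IHn; ring. Qed.
Lemma rs_plus n f g : rs n (fun i => f i + g i) = rs n f + rs n g.
Proof. induction n; simpl. ring. rewrite IHn; ring. Qed.
Lemma cs_mult_l n c f : cs n (fun i => Cmult c (f i)) = Cmult c (cs n f).
Proof. induction n; simpl. apply injective_projections; simpl; ring. rewrite IHn; ring. Qed.
Lemma rs_mult_l n c f : rs n (fun i => c * f i) = c * rs n f.
Proof. induction n; simpl. ring. rewrite IHn; ring. Qed.
Lemma cs_zero n : cs n (fun _ => RtoC 0) = RtoC 0.
Proof. induction n; simpl; auto. rewrite IHn; ring. Qed.
Lemma rs_zero n : rs n (fun _ => 0) = 0.
Proof. induction n; simpl; auto. rewrite IHn; ring. Qed.
Lemma cs_swap n m (f : nat -> nat -> C) :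
  cs n (fun i => cs m (fun j => f i j)) = cs m (fun j => cs n (fun i => f i j)).
Proof.
  induction n; simpl. rewrite cs_zero; auto.
  rewrite IHn, <- cs_plus; auto.
Qed.
Lemma rs_swap n m (f : nat -> nat -> R) :
  rs n (fun i => rs m (fun j => f i j)) = rs m (fun j => rs n (fun i => f i j)).
Proof.
  induction n; simpl. rewrite rs_zero; auto.
  rewrite IHn, <- rs_plus; auto.
Qed.
Lemma cs_delta n k (f : nat -> C) :
  cs n (fun i => if Nat.eqb i k then f i else RtoC 0) = if Nat.ltb k n then f k else RtoC 0.
Proof.
  induction n; simpl; auto.
  rewrite IHn. destruct (Nat.eqb_spec n k); destruct (Nat.ltb_spec k n); destruct (Nat.ltb_spec k (S n));
   try lia; subst; ring.
Qed.
Lemma rs_le n f g : (forall i, (i < n)%nat -> f i <= g i) -> rs n f <= rs n g.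
Proof. induction n; intros H; simpl. lra. apply Rplus_le_compat; auto. Qed.
Lemma rs_nonneg n f : (forall i, (i < n)%nat -> 0 <= f i) -> 0 <= rs n f.
Proof. intros H. rewrite <- (rs_zero n). apply rs_le; auto. Qed.
Lemma rs_mono n m f : (forall i, 0 <= f i) -> (n <= m)%nat -> rs n f <= rs m f.
Proof. intros H Hnm. induction Hnm. lra. simpl. specialize (H m). lra. Qed.
Lemma cs_norm n f : Cmod (cs n f) <= rs n (fun i => Cmod (f i)).
Proof.
  induction n; simpl. rewrite Cmod_0; lra.
  eapply Rle_trans. apply Cmod_triangle. lra.
Qed.
Lemma cs_extend n m f : (n <= m)%nat -> (forall i, (n <= i < m)%nat -> f i = RtoC 0) -> cs m f = cs n f.
Proof.
  intros Hnm. induction Hnm; intros H; auto. simpl. rewrite IHHnm, H. ring. lia.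
  intros; apply H; lia.
Qed.
Lemma rs_extend n m f : (n <= m)%nat -> (forall i, (n <= i < m)%nat -> f i = 0) -> rs m f = rs n f.
Proof.
  intros Hnm. induction Hnm; intros H; auto. simpl. rewrite IHHnm, H. ring. lia.
  intros; apply H; lia.
Qed.
Lemma cs_fst n f : fst (cs n f) = rs n (fun i => fst (f i)).
Proof. induction n; simpl; auto. rewrite IHn; auto. Qed.
Lemma cs_snd n f : snd (cs n f) = rs n (fun i => snd (f i)).
Proof. induction n; simpl; auto. rewrite IHn; auto. Qed.
Lemma cs_RtoC n f : cs n (fun i => RtoC (f i)) = RtoC (rs n f).
Proof. apply injective_projections. rewrite cs_fst; auto. rewrite cs_snd; simpl. apply rs_zero. Qed.

Lemma is_series_eps {K : AbsRing} {V : NormedModule K} (a : nat -> V) l :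
  is_series a l <-> forall eps, 0 < eps -> exists N, forall n, (N <= n)%nat -> norm (minus (sum_n a n) l) < eps.
Proof.
  unfold is_series. split.
  - intros H eps Heps. pose proof (proj1 (filterlim_locally (sum_n a) l) H) as H'.
    assert (Hp : 0 < eps / @norm_factor K V). { apply Rdiv_lt_0_compat; auto. apply (@norm_factor_gt_0 K V). }
    destruct (H' (mkposreal _ Hp)) as [N HN]. exists N. intros n Hn.
    specialize (HN n Hn). apply norm_compat2 in HN. simpl in HN.
    replace eps with (@norm_factor K V * (eps / @norm_factor K V)). auto.
    field. apply Rgt_not_eq, (@norm_factor_gt_0 K V).
  - intros H. apply (proj2 (filterlim_locally (sum_n a) l)).
    intros eps. destruct (H eps (cond_pos eps)) as [N HN]. exists N. intros n Hn.
    apply norm_compat1. auto.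
Qed.

Lemma sum_n_cs (a : nat -> C) n : @sum_n C_AbelianMonoid a n = cs (S n) a.
Proof. induction n. rewrite sum_O. simpl. apply injective_projections; simpl; ring.
  rewrite sum_Sn, IHn. reflexivity. Qed.
Lemma sum_n_rs (a : nat -> R) n : @sum_n R_AbelianMonoid a n = rs (S n) a.
Proof. induction n. rewrite sum_O. simpl. ring.
  rewrite sum_Sn, IHn. reflexivity. Qed.

Definition convC (s : nat -> C) (l : C) :=
  forall eps, 0 < eps -> exists N, forall n, (N <= n)%nat -> Cmod (Cminus (s n) l) < eps.
Definition convR (s : nat -> R) (l : R) :=
  forall eps, 0 < eps -> exists N, forall n, (N <= n)%nat -> Rabs (s n - l) < eps.

Lemma normC_minus (a : nat -> C_NormedModule) l n :
  norm (minus (sum_n a n) l) = Cmod (Cminus (cs (S n) a) l).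
Proof. rewrite <- sum_n_cs. reflexivity. Qed.
Lemma normR_minus (a : nat -> R_NormedModule) l n :
  norm (minus (sum_n a n) l) = Rabs (rs (S n) a - l).
Proof. rewrite <- sum_n_rs. reflexivity. Qed.

Lemma is_seriesC_conv a l : is_series (V := C_NormedModule) a l <-> convC (fun n => cs n a) l.
Proof.
  rewrite is_series_eps. split; intros H eps He; destruct (H eps He) as [N HN].
  - exists (S N). intros n Hn. destruct n. lia. rewrite <- normC_minus. apply HN; lia.
  - exists N. intros n Hn. specialize (HN (S n) ltac:(lia)). rewrite normC_minus. exact HN.
Qed.
Lemma is_seriesR_conv a l : is_series (V := R_NormedModule) a l <-> convR (fun n => rs n a) l.
Proof.
  rewrite is_series_eps. split; intros H eps He; destruct (H eps He) as [N HN].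
  - exists (S N). intros n Hn. destruct n. lia. rewrite <- normR_minus. apply HN; lia.
  - exists N. intros n Hn. specialize (HN (S n) ltac:(lia)). rewrite normR_minus. exact HN.
Qed.

Lemma small_eq0 (c : C) : (forall eps, 0 < eps -> Cmod c < eps) -> c = RtoC 0.
Proof.
  intros H. destruct (Ceq_dec c (RtoC 0)) as [e|ne]; auto. exfalso.
  assert (Hp : 0 < Cmod c) by (apply Cmod_gt_0; auto).
  specialize (H _ Hp). lra.
Qed.
Lemma small_eq (a b : C) : (forall eps, 0 < eps -> Cmod (Cminus a b) < eps) -> a = b.
Proof. intros H. apply small_eq0 in H. replace a with (Cplus (Cminus a b) b) by ring. rewrite H; ring. Qed.

Lemma convC_unique s l1 l2 : convC s l1 -> convC s l2 -> l1 = l2.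
Proof.
  intros H1 H2. apply small_eq. intros eps He.
  destruct (H1 (eps/2) ltac:(lra)) as [N1 HN1]. destruct (H2 (eps/2) ltac:(lra)) as [N2 HN2].
  specialize (HN1 (N1+N2)%nat ltac:(lia)). specialize (HN2 (N1+N2)%nat ltac:(lia)).
  replace (Cminus l1 l2) with (Cplus (Cminus (s (N1+N2)%nat) l2) (Copp (Cminus (s (N1+N2)%nat) l1))) by ring.
  eapply Rle_lt_trans. apply Cmod_triangle. rewrite Cmod_opp. lra.
Qed.

Definition upd (d : nat) (t : R) (th : nat -> R) : nat -> R :=
  fun i => if Nat.eqb i d then t else th i.
Definition dist (d : nat) (u v : nat -> R) : R := rs d (fun i => Rabs (u i - v i)).

Lemma dist_nonneg d u v : 0 <= dist d u v.
Proof. apply rs_nonneg. intros; apply Rabs_pos. Qed.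

Lemma dist_upd_same d t u v : dist (S d) (upd d t u) (upd d t v) = dist d u v.
Proof.
  unfold dist, upd. simpl. rewrite Nat.eqb_refl. unfold Rminus. rewrite Rplus_opp_r, Rabs_R0, Rplus_0_r.
  apply rs_ext. intros i Hi. destruct (Nat.eqb_spec i d); try lia; auto.
Qed.
Lemma dist_upd_diff d t s u : dist (S d) (upd d t u) (upd d s u) = Rabs (t - s).
Proof.
  unfold dist, upd. simpl. rewrite Nat.eqb_refl.
  rewrite (rs_ext _ _ (fun _ => 0)). rewrite rs_zero. ring.
  intros i Hi. destruct (Nat.eqb_spec i d); try lia. unfold Rminus; rewrite Rplus_opp_r; apply Rabs_R0.
Qed.

Definition nice (d : nat) (f : (nat -> R) -> R) : Prop :=
  exists K M, forall u v, Rabs (f u) <= M /\ Rabs (f u - f v) <= K * dist d u v.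

Lemma nice_upd d t f : nice (S d) f -> nice d (fun u => f (upd d t u)).
Proof.
  intros [K [M H]]. exists K, M. intros u v. destruct (H (upd d t u) (upd d t v)) as [H1 H2].
  split; auto. rewrite dist_upd_same in H2; auto.
Qed.
Lemma nice_plus d f g : nice d f -> nice d g -> nice d (fun u => f u + g u).
Proof.
  intros [K1 [M1 H1]] [K2 [M2 H2]]. exists (K1 + K2), (M1 + M2). intros u v.
  destruct (H1 u v) as [A1 B1]. destruct (H2 u v) as [A2 B2]. split.
  eapply Rle_trans. apply Rabs_triang. lra.
  replace (f u + g u - (f v + g v)) with ((f u - f v) + (g u - g v)) by ring.
  eapply Rle_trans. apply Rabs_triang. lra.
Qed.
Lemma nice_scal d c f : nice d f -> nice d (fun u => c * f u).
Proof.
  intros [K [M H]]. exists (Rabs c * K), (Rabs c * M). intros u v.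
  destruct (H u v) as [A B]. split.
  rewrite Rabs_mult. apply Rmult_le_compat_l; auto. apply Rabs_pos.
  replace (c * f u - c * f v) with (c * (f u - f v)) by ring. rewrite Rabs_mult, Rmult_assoc.
  apply Rmult_le_compat_l; auto. apply Rabs_pos.
Qed.
Lemma nice_mult d f g : nice d f -> nice d g -> nice d (fun u => f u * g u).
Proof.
  intros [K1 [M1 H1]] [K2 [M2 H2]]. exists (K1 * M2 + M1 * K2), (M1 * M2). intros u v.
  destruct (H1 u v) as [A1 B1]. destruct (H2 u v) as [A2 B2].
  destruct (H1 v v) as [A1' _]. destruct (H2 v v) as [A2' _].
  assert (0 <= dist d u v) by apply dist_nonneg. split.
  rewrite Rabs_mult. apply Rmult_le_compat; auto; apply Rabs_pos.
  replace (f u * g u - f v * g v) with ((f u - f v) * g u + f v * (g u - g v)) by ring.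
  eapply Rle_trans. apply Rabs_triang. rewrite !Rabs_mult.
  assert (Rabs (f u - f v) * Rabs (g u) <= K1 * dist d u v * M2).
  { apply Rmult_le_compat; auto; apply Rabs_pos. }
  assert (Rabs (f v) * Rabs (g u - g v) <= M1 * (K2 * dist d u v)).
  { apply Rmult_le_compat; auto; apply Rabs_pos. }
  nra.
Qed.
Lemma nice_const d c : nice d (fun _ => c).
Proof. exists 0, (Rabs c). intros u v. split. lra. unfold Rminus; rewrite Rplus_opp_r, Rabs_R0. 
  pose proof (dist_nonneg d u v). nra. Qed.

Lemma lip_continuous (f : R -> R) L x : (forall t s, Rabs (f t - f s) <= L * Rabs (t - s)) -> continuous f x.
Proof.
  intros H. apply continuity_pt_filterlim. intros eps Heps.
  exists (eps / (Rabs L + 1)). split. apply Rdiv_lt_0_compat; auto. pose proof (Rabs_pos L); lra.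
  intros y [_ Hy]. simpl in *. unfold R_dist in *.
  eapply Rle_lt_trans. apply H. eapply Rle_lt_trans. apply Rmult_le_compat_r. apply Rabs_pos. apply Rle_abs.
  pose proof (Rabs_pos L).
  apply Rle_lt_trans with (Rabs L * (eps / (Rabs L + 1))). apply Rmult_le_compat_l; lra.
  replace (Rabs L * (eps / (Rabs L + 1))) with (eps * (Rabs L / (Rabs L + 1))) by (field; lra).
  rewrite <- (Rmult_1_r eps) at 2. apply Rmult_lt_compat_l; auto.
  apply Rmult_lt_reg_r with (Rabs L + 1). lra. unfold Rdiv. rewrite Rmult_assoc, Rinv_l; lra.
Qed.

Lemma cube_props d : forall f g, nice d f -> nice d g ->
  cube_int d (fun u => f u + g u) = cube_int d f + cube_int d g /\
  (forall c, cube_int d (fun u => c * f u) = c * cube_int d f) /\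
  (forall M, (forall u, Rabs (f u) <= M) -> Rabs (cube_int d f) <= (2*PI)^d * M).
Proof.
  induction d; intros f g Hf Hg.
  - simpl. split; auto. split; auto. intros M HM. rewrite Rmult_1_l. auto.
  -
    assert (Lip : forall h, nice (S d) h -> exists L, forall t s,
       Rabs (cube_int d (fun u => h (upd d t u)) - cube_int d (fun u => h (upd d s u))) <= L * Rabs (t - s)).
    { intros h [K [M Hh]]. exists ((2*PI)^d * K). intros t s.
      assert (N1 : nice d (fun u => h (upd d t u))) by (apply nice_upd; exists K, M; auto).
      assert (N2 : nice d (fun u => h (upd d s u))) by (apply nice_upd; exists K, M; auto).
      assert (N3 : nice d (fun u => -1 * h (upd d s u))) by (apply nice_scal; auto).
      destruct (IHd _ _ N1 N3) as [E1 _]. destruct (IHd _ _ N2 N1) as [_ [E2 _]].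
      replace (cube_int d (fun u => h (upd d t u)) - cube_int d (fun u => h (upd d s u)))
        with (cube_int d (fun u => h (upd d t u) + -1 * h (upd d s u))).
      destruct (IHd _ _ (nice_plus _ _ _ N1 N3) N1) as [_ [_ E3]].
      rewrite Rmult_assoc. apply E3. intros u. destruct (Hh (upd d t u) (upd d s u)) as [_ B].
      rewrite dist_upd_diff in B. replace (h (upd d t u) + -1 * h (upd d s u)) with (h (upd d t u) - h (upd d s u)) by ring. auto.
      rewrite E1, E2. ring. }
    assert (Ex : forall h, nice (S d) h -> ex_RInt (fun t => cube_int d (fun u => h (upd d t u))) 0 (2*PI)).
    { intros h Hh. destruct (Lip h Hh) as [L HL]. apply (ex_RInt_continuous (V := R_CompleteNormedModule)). intros z _.
      apply lip_continuous with L. auto. }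
    simpl. fold (upd d). split; [|split].
    + rewrite <- (RInt_plus (V := R_CompleteNormedModule)); try apply Ex; auto.
      apply RInt_ext. intros t _. apply IHd; apply nice_upd; auto.
    + intros c. rewrite <- (RInt_scal (V := R_CompleteNormedModule)); try apply Ex; auto.
      apply RInt_ext. intros t _.
      apply (proj1 (proj2 (IHd (fun u => f (upd d t u)) (fun u => f (upd d t u)) (nice_upd _ _ _ Hf) (nice_upd _ _ _ Hf)))).
    + intros M HM. 
      assert (HM0 : 0 <= M). { pose proof (HM (fun _ => 0)). pose proof (Rabs_pos (f (fun _ => 0))). lra. }
      eapply Rle_trans. apply abs_RInt_le_const. pose proof PI_RGT_0; lra. apply Ex; auto.
      intros t _. 
      apply (proj2 (proj2 (IHd (fun u => f (upd d t u)) (fun u => f (upd d t u)) (nice_upd _ _ _ Hf) (nice_upd _ _ _ Hf)))).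
      intros u; apply HM.
      simpl. lra.
Qed.

Lemma cube_plus d f g : nice d f -> nice d g ->
  cube_int d (fun u => f u + g u) = cube_int d f + cube_int d g.
Proof. intros. apply cube_props; auto. Qed.
Lemma cube_scal d c f : nice d f -> cube_int d (fun u => c * f u) = c * cube_int d f.
Proof. intros. apply (cube_props d f f); auto. Qed.
Lemma cube_bound d f M : nice d f -> (forall u, Rabs (f u) <= M) -> Rabs (cube_int d f) <= (2*PI)^d * M.
Proof. intros. apply (cube_props d f f); auto. Qed.
Lemma cube_ext d f g : (forall u, f u = g u) -> cube_int d f = cube_int d g.
Proof. intros H. replace f with g; auto. apply functional_extensionality; auto. Qed.

Lemma Rabs_sin_le x : Rabs (sin x) <= Rabs x.
Proof.
  assert (H : forall x, 0 <= x -> Rabs (sin x) <= x).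
  { intros y Hy. destruct (Req_dec y 0). subst. rewrite sin_0, Rabs_R0; lra.
    pose proof (sin_lt_x y ltac:(lra)). pose proof (SIN_bound y). pose proof PI_RGT_0.
    apply Rabs_le. split; try lra.
    destruct (Rle_dec y 1). pose proof (sin_ge_0 y Hy ltac:(pose proof PI2_1; lra)). lra. lra. }
  destruct (Rle_dec 0 x). rewrite (Rabs_right x); try lra. auto.
  rewrite <- (Rabs_Ropp x), <- (Rabs_Ropp (sin x)), <- sin_neg. rewrite (Rabs_right (-x)); try lra. apply H; lra.
Qed.
Lemma cos_lip a b : Rabs (cos a - cos b) <= Rabs (a - b).
Proof.
  rewrite form2. rewrite !Rabs_mult. pose proof (Rabs_sin_le ((a-b)/2)). pose proof (SIN_bound ((a+b)/2)).
  assert (Rabs (sin ((a + b) / 2)) <= 1) by (apply Rabs_le; lra).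
  replace (Rabs (a - b)) with (Rabs (-2) * Rabs ((a - b)/2) * 1).
  apply Rmult_le_compat; try apply Rabs_pos. rewrite <- Rabs_mult; apply Rabs_pos.
  apply Rmult_le_compat_l; auto. apply Rabs_pos. auto.
  rewrite <- Rabs_mult. replace (-2 * ((a-b)/2)) with (-(a-b)) by field. rewrite Rabs_Ropp; ring.
Qed.
Lemma sin_lip a b : Rabs (sin a - sin b) <= Rabs (a - b).
Proof.
  rewrite form4. rewrite !Rabs_mult. pose proof (Rabs_sin_le ((a-b)/2)). pose proof (COS_bound ((a+b)/2)).
  assert (Rabs (cos ((a + b) / 2)) <= 1) by (apply Rabs_le; lra).
  replace (Rabs (a - b)) with (Rabs 2 * 1 * Rabs ((a - b)/2)).
  apply Rmult_le_compat; try apply Rabs_pos. rewrite <- Rabs_mult; apply Rabs_pos.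
  apply Rmult_le_compat_l; auto. apply Rabs_pos. lra. auto.
  rewrite Rmult_1_r, <- Rabs_mult. f_equal; field.
Qed.

Definition Lip (d : nat) (f : (nat -> R) -> R) := exists K, forall u v, Rabs (f u - f v) <= K * dist d u v.

Lemma Lip_plus d f g : Lip d f -> Lip d g -> Lip d (fun u => f u + g u).
Proof.
  intros [K1 H1] [K2 H2]. exists (K1 + K2). intros u v.
  replace (f u + g u - (f v + g v)) with ((f u - f v) + (g u - g v)) by ring.
  eapply Rle_trans. apply Rabs_triang. specialize (H1 u v); specialize (H2 u v). lra.
Qed.
Lemma Lip_scal d c f : Lip d f -> Lip d (fun u => c * f u).
Proof.
  intros [K H]. exists (Rabs c * K). intros u v.
  replace (c * f u - c * f v) with (c * (f u - f v)) by ring. rewrite Rabs_mult, Rmult_assoc.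
  apply Rmult_le_compat_l; auto. apply Rabs_pos.
Qed.
Lemma Lip_const d c : Lip d (fun _ => c).
Proof. exists 0. intros u v. unfold Rminus; rewrite Rplus_opp_r, Rabs_R0. pose proof (dist_nonneg d u v); nra. Qed.
Lemma Lip_nice d f : nice d f -> Lip d f.
Proof. intros [K [M H]]. exists K. intros u v; apply H. Qed.
Lemma dist_coord d l u v : (l < d)%nat -> Rabs (u l - v l) <= dist d u v.
Proof.
  unfold dist. induction d; intros Hl. lia. simpl.
  destruct (Nat.eq_dec l d). subst. pose proof (rs_nonneg d (fun i => Rabs (u i - v i)) (fun i _ => Rabs_pos _)). lra.
  pose proof (IHd ltac:(lia)). pose proof (Rabs_pos (u d - v d)). lra.
Qed.
Lemma Lip_coord d l : (l < d)%nat -> Lip d (fun u => u l).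
Proof. intros Hl. exists 1. intros u v. rewrite Rmult_1_l. apply dist_coord; auto. Qed.
Lemma nice_cos d f : Lip d f -> nice d (fun u => cos (f u)).
Proof.
  intros [K H]. exists K, 1. intros u v. split. apply Rabs_le; apply COS_bound.
  eapply Rle_trans. apply cos_lip. auto.
Qed.
Lemma nice_sin d f : Lip d f -> nice d (fun u => sin (f u)).
Proof.
  intros [K H]. exists K, 1. intros u v. split. apply Rabs_le; apply SIN_bound.
  eapply Rle_trans. apply sin_lip. auto.
Qed.
Lemma nice_pow d f n : nice d f -> nice d (fun u => f u ^ n).
Proof. intros H. induction n; simpl. apply nice_const. apply nice_mult; auto. Qed.
Lemma sumd_rs d a : sumd d a = rs d a.
Proof. induction d; simpl; auto. Qed.
Lemma prodd_ext d a b : (forall l, (l < d)%nat -> a l = b l) -> prodd d a = prodd d b.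
Proof. induction d; intros H; simpl; auto. rewrite IHd, H; auto. Qed.
Lemma rs_abs d f : Rabs (rs d f) <= rs d (fun i => Rabs (f i)).
Proof. induction d; simpl. rewrite Rabs_R0; lra. eapply Rle_trans. apply Rabs_triang. lra. Qed.
Lemma rs_minus d f g : rs d f - rs d g = rs d (fun i => f i - g i).
Proof. induction d; simpl. ring. rewrite <- IHd. ring. Qed.
Lemma Lip_sumd d c : Lip d (fun u => sumd d u + c).
Proof.
  exists 1. intros u v. rewrite Rmult_1_l, (sumd_rs d u), (sumd_rs d v). unfold dist.
  replace (rs d u + c - (rs d v + c)) with (rs d u - rs d v) by ring.
  rewrite (rs_minus d u v). apply rs_abs.
Qed.

Definition niceC (d : nat) (F : (nat -> R) -> C) : Prop :=
  nice d (fun u => fst (F u)) /\ nice d (fun u => snd (F u)).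
Definition CI (d : nat) (F : (nat -> R) -> C) : C :=
  (cube_int d (fun u => fst (F u)), cube_int d (fun u => snd (F u))).

Lemma nice_ext d f g : (forall u, f u = g u) -> nice d f -> nice d g.
Proof. intros H Hf. replace g with f; auto. apply functional_extensionality; auto. Qed.
Lemma niceC_ext d F G : (forall u, F u = G u) -> niceC d F -> niceC d G.
Proof. intros H Hf. replace G with F; auto. apply functional_extensionality; auto. Qed.
Lemma niceC_plus d F G : niceC d F -> niceC d G -> niceC d (fun u => Cplus (F u) (G u)).
Proof. intros [A B] [A' B']. split; simpl; apply nice_plus; auto. Qed.
Lemma niceC_mult d F G : niceC d F -> niceC d G -> niceC d (fun u => Cmult (F u) (G u)).
Proof.
  intros [A B] [A' B']. split; simpl.
  - apply (nice_ext d (fun u => fst (F u) * fst (G u) + -1 * (snd (F u) * snd (G u)))).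
    intros; ring. apply nice_plus. apply nice_mult; auto. apply nice_scal, nice_mult; auto.
  - apply nice_plus; apply nice_mult; auto.
Qed.
Lemma niceC_const d c : niceC d (fun _ => c).
Proof. split; apply nice_const. Qed.
Lemma niceC_RtoC d f : nice d f -> niceC d (fun u => RtoC (f u)).
Proof. intros H. split; simpl; auto. apply nice_const. Qed.
Lemma niceC_cis d f : Lip d f -> niceC d (fun u => cis (f u)).
Proof. intros H. split; simpl. apply nice_cos; auto. apply nice_sin; auto. Qed.
Lemma niceC_cs d n F : (forall j, niceC d (F j)) -> niceC d (fun u => cs n (fun j => F j u)).
Proof.
  intros H. induction n; simpl. apply niceC_const. apply niceC_plus; auto.
Qed.

Lemma CI_ext d F G : (forall u, F u = G u) -> CI d F = CI d G.
Proof. intros H. replace F with G; auto. apply functional_extensionality; auto. Qed.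
Lemma CI_plus d F G : niceC d F -> niceC d G -> CI d (fun u => Cplus (F u) (G u)) = Cplus (CI d F) (CI d G).
Proof. intros [A B] [A' B']. unfold CI; simpl. rewrite !cube_plus; auto. Qed.
Lemma CI_scal d c F : niceC d F -> CI d (fun u => Cmult c (F u)) = Cmult c (CI d F).
Proof.
  intros [A B]. unfold CI; simpl. destruct c as [a b]. simpl.
  rewrite (cube_ext d (fun u => a * fst (F u) - b * snd (F u)) (fun u => a * fst (F u) + (-b) * snd (F u))) by (intros; ring).
  rewrite (cube_plus d (fun u => a * fst (F u)) (fun u => (-b) * snd (F u))).
  rewrite (cube_plus d (fun u => a * snd (F u)) (fun u => b * fst (F u))).
  rewrite !cube_scal; auto. apply injective_projections; simpl; ring.
  all: apply nice_scal; auto.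
Qed.
Lemma CI_zero d : CI d (fun _ => RtoC 0) = RtoC 0.
Proof.
  assert (H : CI d (fun _ => RtoC 0) = Cmult (RtoC 0) (CI d (fun _ => RtoC 0))).
  rewrite <- CI_scal. apply CI_ext; intros; ring. apply niceC_const.
  rewrite H; ring.
Qed.
Lemma CI_cs d n F : (forall j, niceC d (F j)) ->
  CI d (fun u => cs n (fun j => F j u)) = cs n (fun j => CI d (F j)).
Proof.
  intros H. induction n; simpl. apply CI_zero.
  rewrite CI_plus; auto. rewrite IHn; auto. apply niceC_cs; auto.
Qed.
Lemma im_le_Cmod' (c : C) : Rabs (snd c) <= Cmod c.
Proof.
  destruct c as [a b]. unfold Cmod; simpl. rewrite <- sqrt_Rsqr_abs. apply sqrt_le_1_alt.
  unfold Rsqr. nra.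
Qed.
Lemma re_le_Cmod' (c : C) : Rabs (fst c) <= Cmod c.
Proof.
  destruct c as [a b]. unfold Cmod; simpl. rewrite <- sqrt_Rsqr_abs. apply sqrt_le_1_alt.
  unfold Rsqr. nra.
Qed.
Lemma Cmod_le_sum (c : C) : Cmod c <= Rabs (fst c) + Rabs (snd c).
Proof.
  destruct c as [a b]. unfold Cmod; simpl. rewrite <- (sqrt_Rsqr (Rabs a + Rabs b)).
  apply sqrt_le_1_alt. unfold Rsqr. pose proof (Rabs_pos a); pose proof (Rabs_pos b).
  rewrite <- (Rabs_sqr_le a) || idtac.
  replace (a * (a * 1) + b * (b * 1)) with (Rabs a * Rabs a + Rabs b * Rabs b).
  nra. rewrite <- !Rabs_mult. rewrite !Rabs_right; try nra. 
  pose proof (Rabs_pos a); pose proof (Rabs_pos b); lra.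
Qed.
Lemma CI_bound d F M : niceC d F -> (forall u, Cmod (F u) <= M) -> Cmod (CI d F) <= 2 * (2*PI)^d * M.
Proof.
  intros [A B] H. eapply Rle_trans. apply Cmod_le_sum. unfold CI; simpl.
  assert (Rabs (cube_int d (fun u => fst (F u))) <= (2*PI)^d * M).
  { apply cube_bound; auto. intros u; eapply Rle_trans. apply re_le_Cmod'. auto. }
  assert (Rabs (cube_int d (fun u => snd (F u))) <= (2*PI)^d * M).
  { apply cube_bound; auto. intros u; eapply Rle_trans. apply im_le_Cmod'. auto. }
  lra.
Qed.

Definition RIntC (h : R -> C) : C :=
  (RInt (fun t => fst (h t)) 0 (2*PI), RInt (fun t => snd (h t)) 0 (2*PI)).
Definition nice1 (h : R -> C) : Prop := exists K M, forall s t, Cmod (h s) <= M /\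
  Rabs (fst (h s) - fst (h t)) <= K * Rabs (s - t) /\ Rabs (snd (h s) - snd (h t)) <= K * Rabs (s - t).

Lemma niceC_coord d l h : nice1 h -> (l < d)%nat -> niceC d (fun u => h (u l)).
Proof.
  intros [K [M H]] Hl. pose proof (dist_coord d l).
  assert (0 <= K). { destruct (H 0 1) as [_ [X _]]. pose proof (Rabs_pos (fst (h 0) - fst (h 1))).
    replace (Rabs (0 - 1)) with 1 in X. lra. rewrite Rabs_left; lra. }
  split; exists K, M; intros u v; destruct (H (u l) (v l)) as [A [B1 B2]]; split.
  - eapply Rle_trans. apply re_le_Cmod'. auto.
  - eapply Rle_trans. apply B1. apply Rmult_le_compat_l; auto.
  - eapply Rle_trans. apply im_le_Cmod'. auto.
  - eapply Rle_trans. apply B2. apply Rmult_le_compat_l; auto.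
Qed.
Lemma Cprodd_ext d a b : (forall l, (l < d)%nat -> a l = b l) -> Cprodd d a = Cprodd d b.
Proof. induction d; intros H; simpl; auto. rewrite IHd, H; auto. Qed.
Lemma niceC_prod d n h : (forall l, nice1 (h l)) -> (n <= d)%nat ->
  niceC d (fun u => Cprodd n (fun l => h l (u l))).
Proof.
  intros H. induction n; intros Hn; simpl. apply niceC_const.
  apply niceC_mult. apply IHn; lia. apply niceC_coord; auto.
Qed.
Lemma nice1_ex (h : R -> C) : nice1 h ->
  ex_RInt (fun t => fst (h t)) 0 (2*PI) /\ ex_RInt (fun t => snd (h t)) 0 (2*PI).
Proof.
  intros [K [M H]]. split; apply (ex_RInt_continuous (V := R_CompleteNormedModule)); intros z _;
  apply lip_continuous with K; intros; apply H.
Qed.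

Lemma CI_prod d h : (forall l, nice1 (h l)) ->
  CI d (fun u => Cprodd d (fun l => h l (u l))) = Cprodd d (fun l => RIntC (h l)).
Proof.
  intros H. induction d.
  - unfold CI; simpl. auto.
  - set (P := fun u => Cprodd d (fun l => h l (u l))).
    assert (NP : niceC d P) by (apply niceC_prod; auto).
    assert (E : forall t, CI d (fun u => Cprodd (S d) (fun l => h l (upd d t u l))) = Cmult (h d t) (Cprodd d (fun l => RIntC (h l)))).
    { intros t. rewrite <- IHd, <- CI_scal; auto. apply CI_ext. intros u. simpl.
      unfold upd at 2. rewrite Nat.eqb_refl. rewrite Cmult_comm. f_equal.
      apply Cprodd_ext. intros l Hl. unfold upd. destruct (Nat.eqb_spec l d); try lia; auto. }
    set (Pi := Cprodd d (fun l => RIntC (h l))) in *.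
    destruct (nice1_ex (h d) (H d)) as [E1 E2].
    unfold CI. simpl. fold (upd d).
    rewrite (RInt_ext (V := R_CompleteNormedModule) _ (fun t => fst Pi * fst (h d t) + (- snd Pi) * snd (h d t))).
    rewrite (RInt_ext (V := R_CompleteNormedModule) (fun t => cube_int d (fun th => snd (Cprodd (S d) (fun l => h l (upd d t th l)))))
        (fun t => snd Pi * fst (h d t) + fst Pi * snd (h d t))).
    rewrite !(RInt_plus (V := R_CompleteNormedModule)); try apply (ex_RInt_scal (V := R_CompleteNormedModule)); auto.
    rewrite !(RInt_scal (V := R_CompleteNormedModule)); auto.
    unfold Pi, RIntC. apply injective_projections; simpl; unfold scal, plus; simpl; unfold mult, plus; simpl; ring.
    + intros t _. transitivity (snd (CI d (fun u => Cprodd (S d) (fun l => h l (upd d t u l))))).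
      reflexivity. rewrite E. simpl; ring.
    + intros t _. transitivity (fst (CI d (fun u => Cprodd (S d) (fun l => h l (upd d t u l))))).
      reflexivity. rewrite E. simpl; ring.
Qed.

Lemma CI1 (h : R -> C) : CI 1 (fun u => h (u O)) = RIntC h.
Proof. reflexivity. Qed.

Lemma cis_add a b : cis (a + b) = Cmult (cis a) (cis b).
Proof. unfold cis. apply injective_projections; simpl; [rewrite cos_plus | rewrite sin_plus]; ring. Qed.
Lemma Cmod_cis t : Cmod (cis t) = 1.
Proof. unfold cis, Cmod; simpl. replace (cos t * (cos t * 1) + sin t * (sin t * 1)) with 1. apply sqrt_1. pose proof (sin2_cos2 t) as H; unfold Rsqr in H; lra. Qed.
Lemma cis_0 : cis 0 = RtoC 1.
Proof. unfold cis. rewrite cos_0, sin_0. reflexivity. Qed.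

Lemma convR_infinite_sum a l : infinite_sum a l -> convR (fun n => rs n a) l.
Proof. intros H. apply is_seriesR_conv. apply is_series_Reals. auto. Qed.

Lemma convR_le_lim s l M : convR s l -> (forall n, s n <= M) -> l <= M.
Proof.
  intros H HM. destruct (Rle_dec l M); auto. exfalso.
  destruct (H (l - M) ltac:(lra)) as [N HN]. specialize (HN N (Nat.le_refl _)). specialize (HM N).
  apply Rabs_def2 in HN. lra.
Qed.
Lemma rs_le_lim a l n : (forall i, 0 <= a i) -> convR (fun n => rs n a) l -> rs n a <= l.
Proof.
  intros Ha H. destruct (Rle_dec (rs n a) l); auto. exfalso.
  destruct (H (rs n a - l) ltac:(lra)) as [N HN]. specialize (HN (N + n)%nat ltac:(lia)).
  pose proof (rs_mono n (N+n) a Ha ltac:(lia)). apply Rabs_def2 in HN. lra.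
Qed.

Definition expt (Z : R) (j : nat) : R := Z ^ j / INR (fact j).
Lemma expt_nonneg Z j : 0 <= Z -> 0 <= expt Z j.
Proof. intros. unfold expt. apply Rdiv_le_0_compat. apply pow_le; auto. apply lt_0_INR, lt_O_fact. Qed.
Lemma exp_conv Z : convR (fun n => rs n (expt Z)) (exp Z).
Proof.
  pose proof (is_exp_Reals Z) as H. unfold is_pseries in H.
  apply is_seriesR_conv. eapply is_series_ext. 2: exact H. intros n. simpl. rewrite pow_n_pow.
  unfold scal; simpl; unfold mult; simpl. unfold expt. field. apply not_0_INR, fact_neq_0.
Qed.

Definition ecoef (t : R) (j : nat) : C := Cmult (Cpow (Cmult Ci (RtoC t)) j) (RtoC (/ INR (fact j))).

Lemma Ci_t_sq t : Cpow (Cmult Ci (RtoC t)) 2 = RtoC (- (t * t)).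
Proof. apply injective_projections; simpl; ring. Qed.
Lemma ecoef_even t N : ecoef t (2 * N) = RtoC (cos_n N * (t²) ^ N).
Proof.
  unfold ecoef. rewrite Cpow_mult_r, Ci_t_sq, <- RtoC_pow, <- RtoC_mult. f_equal.
  unfold cos_n, Rsqr. replace (- (t * t)) with (-1 * (t * t)) by ring. rewrite Rpow_mult_distr. unfold Rdiv. ring.
Qed.
Lemma ecoef_odd t N : ecoef t (2 * N + 1) = (0, t * (sin_n N * (t²) ^ N)).
Proof.
  unfold ecoef. rewrite Cpow_add_r, Cpow_mult_r, Ci_t_sq, <- RtoC_pow, Cpow_1_r.
  unfold sin_n, Rsqr. replace (- (t * t)) with (-1 * (t * t)) by ring. rewrite Rpow_mult_distr.
  apply injective_projections; simpl; unfold Rdiv; ring.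
Qed.

Lemma cs_even t N : cs (2 * N) (ecoef t) = (rs N (fun n => cos_n n * (t²)^n), t * rs N (fun n => sin_n n * (t²)^n)).
Proof.
  induction N. simpl. apply injective_projections; simpl; ring.
  replace (2 * S N)%nat with (S (S (2 * N))) by lia.
  change (cs (S (S (2*N))) (ecoef t)) with (Cplus (Cplus (cs (2*N) (ecoef t)) (ecoef t (2*N))) (ecoef t (S (2*N)))).
  rewrite IHN.
  replace (S (2 * N)) with (2 * N + 1)%nat by lia. rewrite ecoef_odd, ecoef_even.
  apply injective_projections; simpl; ring.
Qed.
Lemma cs_odd t N : cs (2 * N + 1) (ecoef t) = (rs (S N) (fun n => cos_n n * (t²)^n), t * rs N (fun n => sin_n n * (t²)^n)).
Proof.
  replace (2 * N + 1)%nat with (S (2 * N)) by lia.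
  change (cs (S (2*N)) (ecoef t)) with (Cplus (cs (2*N) (ecoef t)) (ecoef t (2*N))). rewrite cs_even, ecoef_even.
  apply injective_projections; simpl; ring.
Qed.

Lemma cis_series t : convC (fun n => cs n (ecoef t)) (cis t).
Proof.
  assert (Hc : convR (fun N => rs N (fun n => cos_n n * (t²)^n)) (cos t)).
  { apply convR_infinite_sum. unfold cos. destruct (exist_cos (t²)). auto. }
  assert (Hs : exists a, sin t = t * a /\ convR (fun N => rs N (fun n => sin_n n * (t²)^n)) a).
  { unfold sin. destruct (exist_sin (t²)) as [a Ha]. exists a. split; auto. apply convR_infinite_sum; auto. }
  destruct Hs as [a [Ea Hs]].
  intros eps He.
  assert (He2 : 0 < eps / 2 / (Rabs t + 1)). { pose proof (Rabs_pos t). apply Rdiv_lt_0_compat; lra. }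
  destruct (Hc (eps/2) ltac:(lra)) as [N1 H1]. destruct (Hs _ He2) as [N2 H2].
  exists (2 * (N1 + N2) + 2)%nat. intros n Hn.
  assert (key : forall N, (N1 + N2 <= N)%nat -> forall z, z = (rs N (fun n => cos_n n * (t²)^n), t * rs N (fun n => sin_n n * (t²)^n)) \/
     z = (rs (S N) (fun n => cos_n n * (t²)^n), t * rs N (fun n => sin_n n * (t²)^n)) -> Cmod (Cminus z (cis t)) < eps).
  { intros N HN z Hz. 
    assert (B : forall M, (N1 <= M)%nat -> Cmod (Cminus (rs M (fun n => cos_n n * (t²)^n), t * rs N (fun n => sin_n n * (t²)^n)) (cis t)) < eps).
    { intros M HM. eapply Rle_lt_trans. apply Cmod_le_sum. unfold cis; simpl.
      specialize (H1 M HM). specialize (H2 N ltac:(lia)).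
      replace (t * rs N (fun n => sin_n n * (t²)^n) + - sin t) with (t * (rs N (fun n => sin_n n * (t²)^n) - a)) by (rewrite Ea; ring).
      rewrite Rabs_mult.
      assert (Rabs t * Rabs (rs N (fun n => sin_n n * (t²)^n) - a) <= Rabs t * (eps / 2 / (Rabs t + 1))).
      { apply Rmult_le_compat_l. apply Rabs_pos. lra. }
      assert (Rabs t * (eps / 2 / (Rabs t + 1)) <= eps / 2).
      { pose proof (Rabs_pos t). apply Rmult_le_reg_r with (Rabs t + 1). lra.
        replace (Rabs t * (eps / 2 / (Rabs t + 1)) * (Rabs t + 1)) with (Rabs t * (eps/2)) by (field; lra). nra. }
      replace (rs M (fun n => cos_n n * (t²)^n) + - cos t) with (rs M (fun n => cos_n n * (t²)^n) - cos t) by ring.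
      lra. }
    destruct Hz as [-> | ->]; apply B; lia. }
  destruct (Nat.Even_or_Odd n) as [[N EN] | [N EN]]; subst n.
  - apply (key N ltac:(lia)). left. apply cs_even.
  - apply (key N ltac:(lia)). right. apply cs_odd.
Qed.

Lemma cis_tail t Z N : Rabs t <= Z -> Cmod (Cminus (cis t) (cs N (ecoef t))) <= exp Z - rs N (expt Z).
Proof.
  intros Ht. assert (HZ : 0 <= Z) by (pose proof (Rabs_pos t); lra).
  assert (Hmod : forall j, Cmod (ecoef t j) <= expt Z j).
  { intros j. unfold ecoef, expt. rewrite Cmod_mult, Cmod_pow, Cmod_mult, Cmod_Ci, Cmod_R, Cmod_R, Rmult_1_l.
    rewrite (Rabs_right (/ INR (fact j))). unfold Rdiv. apply Rmult_le_compat_r. left; apply Rinv_0_lt_compat, lt_0_INR, lt_O_fact.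
    apply pow_incr. split; auto. apply Rabs_pos. left; apply Rinv_0_lt_compat, lt_0_INR, lt_O_fact. }
  assert (Gen : forall M, (N <= M)%nat -> Cmod (Cminus (cs M (ecoef t)) (cs N (ecoef t))) <= rs M (expt Z) - rs N (expt Z)).
  { intros M HM. induction HM. replace (Cminus (cs N (ecoef t)) (cs N (ecoef t))) with (RtoC 0) by ring.
    rewrite Cmod_0; lra. simpl. replace (Cminus (Cplus (cs m (ecoef t)) (ecoef t m)) (cs N (ecoef t)))
      with (Cplus (Cminus (cs m (ecoef t)) (cs N (ecoef t))) (ecoef t m)) by ring.
    eapply Rle_trans. apply Cmod_triangle. pose proof (Hmod m). lra. }
  assert (Hseg : forall M, (N <= M)%nat -> Cmod (Cminus (cs M (ecoef t)) (cs N (ecoef t))) <= exp Z - rs N (expt Z)).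
  { intros M HM. eapply Rle_trans. apply Gen; auto.
    pose proof (rs_le_lim (expt Z) (exp Z) M (fun i => expt_nonneg Z i HZ) (exp_conv Z)). lra. }
  apply Rnot_lt_le. intros Hlt.
  set (del := Cmod (Cminus (cis t) (cs N (ecoef t))) - (exp Z - rs N (expt Z))).
  destruct (cis_series t del ltac:(unfold del; lra)) as [M HM].
  specialize (HM (M + N)%nat ltac:(lia)). specialize (Hseg (M + N)%nat ltac:(lia)).
  pose proof (Cmod_triangle (Cminus (cis t) (cs (M+N) (ecoef t))) (Cminus (cs (M+N) (ecoef t)) (cs N (ecoef t)))).
  replace (Cplus (Cminus (cis t) (cs (M+N) (ecoef t))) (Cminus (cs (M+N) (ecoef t)) (cs N (ecoef t))))
    with (Cminus (cis t) (cs N (ecoef t))) in H by ring.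
  rewrite <- Cmod_opp in HM. replace (Copp (Cminus (cs (M + N) (ecoef t)) (cis t))) with (Cminus (cis t) (cs (M+N) (ecoef t))) in HM by ring.
  unfold del in *. lra.
Qed.

Lemma exp_tail_conv Z : forall eps, 0 < eps -> exists N, forall n, (N <= n)%nat -> exp Z - rs n (expt Z) < eps.
Proof.
  intros eps He. destruct (exp_conv Z eps He) as [N HN]. exists N. intros n Hn.
  specialize (HN n Hn). apply Rabs_def2 in HN. lra.
Qed.

Lemma cs_shift n f : cs (S n) f = Cplus (f O) (cs n (fun i => f (S i))).
Proof. induction n. simpl. ring. change (cs (S (S n)) f) with (Cplus (cs (S n) f) (f (S n))).
  rewrite IHn. simpl. ring. Qed.

Definition bc (j p : nat) : R := / (INR (fact p) * INR (fact (j - p))).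
Definition bterm (w : R) (j p : nat) : C := Cmult (RtoC (bc j p)) (cis ((INR j - 2 * INR p) * w)).

Lemma fact_pos' n : 0 < INR (fact n).
Proof. apply lt_0_INR, lt_O_fact. Qed.

Lemma bc_rec j p : (p <= S j)%nat ->
  bc (S j) p = / INR (S j) * ((if Nat.leb p j then bc j p else 0) + (match p with O => 0 | S q => bc j q end)).
Proof.
  intros Hp. unfold bc. pose proof (fact_pos' p). 
  destruct p as [|q].
  - simpl Nat.leb. rewrite Nat.sub_0_r. simpl fact at 1 3. rewrite Nat.sub_0_r.
    change (fact (S j)) with (S j * fact j)%nat. rewrite mult_INR. pose proof (fact_pos' j).
    pose proof (lt_0_INR (S j) ltac:(lia)). change (INR 1) with 1. field. split; lra.
  - destruct (Nat.leb_spec (S q) j).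
    + replace (S j - S q)%nat with (S (j - S q)) by lia.
      replace (j - q)%nat with (S (j - S q)) by lia.
      set (r := (j - S q)%nat). assert (Ej : j = (q + r + 1)%nat) by lia.
      change (fact (S q)) with (S q * fact q)%nat. change (fact (S r)) with (S r * fact r)%nat.
      rewrite !mult_INR. pose proof (fact_pos' q). pose proof (fact_pos' r).
      rewrite Ej. rewrite !S_INR, !plus_INR. simpl INR. pose proof (pos_INR q); pose proof (pos_INR r).
      field. repeat split; lra.
    + assert (q = j) by lia. subst q. rewrite Nat.sub_diag. replace (S j - S j)%nat with O by lia.
      change (fact (S j)) with (S j * fact j)%nat. rewrite mult_INR. pose proof (fact_pos' j).
      pose proof (lt_0_INR (S j) ltac:(lia)). simpl fact. rewrite Nat.sub_diag. simpl fact. change (INR 1) with 1. field. lra.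
Qed.

Lemma binom_cis w j : RtoC ((2 * cos w) ^ j / INR (fact j)) = cs (S j) (bterm w j).
Proof.
  induction j.
  - simpl. unfold bterm, bc. simpl. replace ((0 - 2 * 0) * w) with 0 by ring. rewrite cis_0. apply injective_projections; simpl; field.
  - set (X := cs (S j) (fun p => Cmult (RtoC (bc j p)) (cis ((INR j + 1 - 2 * INR p) * w)))).
    set (Y := cs (S j) (fun p => Cmult (RtoC (bc j p)) (cis ((INR j - 1 - 2 * INR p) * w)))).
    assert (E1 : RtoC ((2 * cos w) ^ S j / INR (fact (S j))) = Cmult (RtoC (/ INR (S j))) (Cplus X Y)).
    { replace ((2 * cos w) ^ S j / INR (fact (S j))) with (/ INR (S j) * ((2 * cos w) * ((2 * cos w) ^ j / INR (fact j)))).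
      2:{ change (fact (S j)) with (S j * fact j)%nat. rewrite mult_INR. simpl pow. pose proof (fact_pos' j).
          pose proof (lt_0_INR (S j) ltac:(lia)). field. lra. }
      rewrite !RtoC_mult, IHj. f_equal.
      replace (Cmult (RtoC 2) (RtoC (cos w))) with (Cplus (cis w) (cis (-w))).
      2:{ unfold cis. rewrite cos_neg, sin_neg. apply injective_projections; simpl; ring. }
      unfold X, Y. rewrite <- !cs_mult_l, <- cs_plus. apply cs_ext. intros p _.
      unfold bterm. replace ((INR j + 1 - 2 * INR p) * w) with (w + (INR j - 2 * INR p) * w) by ring.
      replace ((INR j - 1 - 2 * INR p) * w) with (-w + (INR j - 2 * INR p) * w) by ring.
      rewrite !cis_add. ring. }
    rewrite E1.
    rewrite (cs_ext _ _ (fun p => Cmult (RtoC (/ INR (S j))) (Cplus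
       (Cmult (RtoC (if Nat.leb p j then bc j p else 0)) (cis ((INR (S j) - 2 * INR p) * w)))
       (Cmult (RtoC (match p with O => 0 | S q => bc j q end)) (cis ((INR (S j) - 2 * INR p) * w)))))).
    2:{ intros p Hp. unfold bterm. rewrite bc_rec by lia. rewrite !RtoC_mult, RtoC_plus. ring. }
    rewrite cs_mult_l, cs_plus. f_equal. f_equal.
    + change (cs (S (S j)) ?f) with (Cplus (cs (S j) f) (f (S j))).
      cbv beta. replace (Nat.leb (S j) j) with false by (symmetry; apply Nat.leb_gt; lia).
      rewrite Cmult_0_l, Cplus_0_r. unfold X. apply cs_ext. intros p Hp.
      replace (Nat.leb p j) with true by (symmetry; apply Nat.leb_le; lia). rewrite S_INR. reflexivity.
    + rewrite cs_shift. replace (Cmult (RtoC 0) (cis ((INR (S j) - 2 * INR 0) * w))) with (RtoC 0) by ring.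
      rewrite Cplus_0_l. unfold Y. apply cs_ext. intros p Hp. rewrite !S_INR. f_equal. f_equal. ring.
Qed.

Lemma rs_ind_eq N K e : (K <= N)%nat -> rs N (fun p => if Nat.leb K p then e p else 0) = rs N e - rs K e.
Proof.
  intros H. induction H.
  - rewrite (rs_ext _ _ (fun _ => 0)). rewrite rs_zero; ring. intros i Hi. destruct (Nat.leb_spec K i); auto; lia.
  - simpl. rewrite IHle. destruct (Nat.leb_spec K m); try lia. ring.
Qed.
Lemma tail_nonneg Z K : 0 <= Z -> 0 <= exp Z - rs K (expt Z).
Proof. intros HZ. pose proof (rs_le_lim (expt Z) (exp Z) K (fun i => expt_nonneg Z i HZ) (exp_conv Z)). lra. Qed.
Lemma rs_ind_tail Z N K : 0 <= Z -> rs N (fun p => if Nat.leb K p then expt Z p else 0) <= exp Z - rs K (expt Z).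
Proof.
  intros HZ. destruct (Nat.le_gt_cases K N).
  - rewrite rs_ind_eq; auto. pose proof (rs_le_lim (expt Z) (exp Z) N (fun i => expt_nonneg Z i HZ) (exp_conv Z)). lra.
  - rewrite (rs_ext _ _ (fun _ => 0)). rewrite rs_zero. apply tail_nonneg; auto.
    intros i Hi. destruct (Nat.leb_spec K i); auto; lia.
Qed.
Lemma rs_expt_le Z N : 0 <= Z -> rs N (expt Z) <= exp Z.
Proof. intros HZ. apply (rs_le_lim (expt Z) (exp Z) N (fun i => expt_nonneg Z i HZ) (exp_conv Z)). Qed.
Lemma expt_le_exp Z p : 0 <= Z -> expt Z p <= exp Z.
Proof. intros HZ. pose proof (rs_expt_le Z (S p) HZ). simpl in H. pose proof (rs_nonneg p (expt Z) (fun i _ => expt_nonneg Z i HZ)). lra. Qed.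

Lemma fact_mult_le p m : (fact p * fact m <= fact (p + m))%nat.
Proof.
  induction m. rewrite Nat.add_0_r. simpl. lia.
  replace (p + S m)%nat with (S (p + m)) by lia. simpl fact.
  assert (fact p * fact m <= fact (p+m))%nat by auto. nia.
Qed.
Lemma expt_add Z p m : 0 <= Z -> expt Z (p + m) <= expt Z p * expt Z m.
Proof.
  intros HZ. unfold expt. rewrite pow_add.
  pose proof (fact_pos' p). pose proof (fact_pos' m). pose proof (fact_pos' (p+m)).
  pose proof (le_INR _ _ (fact_mult_le p m)). rewrite mult_INR in H2.
  replace (Z ^ p / INR (fact p) * (Z ^ m / INR (fact m))) with (Z ^ p * Z ^ m / (INR (fact p) * INR (fact m))) by (field; lra).
  unfold Rdiv. apply Rmult_le_compat_l. apply Rmult_le_pos; apply pow_le; auto.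
  apply Rinv_le_contravar; auto. nra.
Qed.
Lemma expt_S Z n : 0 <= Z -> expt Z (S n) <= Z * expt Z n.
Proof.
  intros HZ. replace (S n) with (n + 1)%nat by lia. eapply Rle_trans. apply expt_add; auto.
  unfold expt at 2. simpl. replace (Z * 1 / 1) with Z by field. rewrite Rmult_comm. lra.
Qed.

Lemma tail_bound (a : nat -> C) l b B M : convC (fun n => cs n a) l -> (forall p, Cmod (a p) <= b p) ->
  (forall p, 0 <= b p) -> convR (fun n => rs n b) B -> Cmod (Cminus l (cs M a)) <= B - rs M b.
Proof.
  intros Hl Hab Hb HB.
  assert (Gen : forall N, (M <= N)%nat -> Cmod (Cminus (cs N a) (cs M a)) <= rs N b - rs M b).
  { intros N HN. induction HN. replace (Cminus (cs M a) (cs M a)) with (RtoC 0) by ring.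
    rewrite Cmod_0; lra. simpl. replace (Cminus (Cplus (cs m a) (a m)) (cs M a))
      with (Cplus (Cminus (cs m a) (cs M a)) (a m)) by ring.
    eapply Rle_trans. apply Cmod_triangle. pose proof (Hab m). lra. }
  apply Rnot_lt_le. intros Hlt.
  set (del := Cmod (Cminus l (cs M a)) - (B - rs M b)).
  destruct (Hl del ltac:(unfold del; lra)) as [N HN].
  specialize (HN (N + M)%nat ltac:(lia)). specialize (Gen (N + M)%nat ltac:(lia)).
  pose proof (rs_le_lim b B (N+M) Hb HB).
  pose proof (Cmod_triangle (Cminus l (cs (N+M) a)) (Cminus (cs (N+M) a) (cs M a))).
  replace (Cplus (Cminus l (cs (N+M) a)) (Cminus (cs (N+M) a) (cs M a))) with (Cminus l (cs M a)) in H0 by ring.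
  rewrite <- Cmod_opp in HN. replace (Copp (Cminus (cs (N + M) a) l)) with (Cminus l (cs (N+M) a)) in HN by ring.
  unfold del in *. lra.
Qed.
Lemma limit_bound (a : nat -> C) l b B : convC (fun n => cs n a) l -> (forall p, Cmod (a p) <= b p) ->
  (forall p, 0 <= b p) -> convR (fun n => rs n b) B -> Cmod l <= B.
Proof.
  intros. pose proof (tail_bound a l b B 0 H H0 H1 H2). simpl in H3.
  replace (Cminus l (RtoC 0)) with l in H3 by ring. lra.
Qed.
Lemma convR_scal s l c : convR s l -> convR (fun n => c * s n) (c * l).
Proof.
  intros H eps He. destruct (H (eps / (Rabs c + 1))) as [N HN].
  apply Rdiv_lt_0_compat; auto. pose proof (Rabs_pos c); lra.
  exists N. intros n Hn. specialize (HN n Hn).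
  replace (c * s n - c * l) with (c * (s n - l)) by ring. rewrite Rabs_mult.
  pose proof (Rabs_pos c). pose proof (Rabs_pos (s n - l)).
  apply Rle_lt_trans with (Rabs c * (eps / (Rabs c + 1))). apply Rmult_le_compat_l; lra.
  apply Rmult_lt_reg_r with (Rabs c + 1). lra.
  replace (Rabs c * (eps / (Rabs c + 1)) * (Rabs c + 1)) with (Rabs c * eps) by (field; lra). nra.
Qed.
Lemma conv_expt_scal Z c : convR (fun n => rs n (fun p => c * expt Z p)) (c * exp Z).
Proof.
  intros eps He. destruct (convR_scal _ _ c (exp_conv Z) eps He) as [N HN]. exists N. intros n Hn.
  rewrite rs_mult_l. apply HN; auto.
Qed.

Local Open Scope bool_scope.

Definition Q (T : nat -> nat -> C) N (w : nat -> nat -> bool) : C :=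
  cs N (fun p => cs N (fun q => if w p q then T p q else RtoC 0)).
Definition Qall (T : nat -> nat -> C) K : C := cs K (fun p => cs K (fun q => T p q)).

Lemma cs_minus n f g : Cminus (cs n f) (cs n g) = cs n (fun i => Cminus (f i) (g i)).
Proof. induction n; simpl. ring. rewrite <- IHn. ring. Qed.

Lemma Q_sq T K N : (K <= N)%nat -> Q T N (fun p q => Nat.ltb p K && Nat.ltb q K) = Qall T K.
Proof.
  intros HK. unfold Q, Qall.
  rewrite (cs_extend K N). 2: auto.
  - apply cs_ext. intros p Hp. rewrite (cs_extend K N); auto.
    + apply cs_ext. intros q Hq. destruct (Nat.ltb_spec p K); destruct (Nat.ltb_spec q K); try lia; auto.
    + intros q Hq. destruct (Nat.ltb_spec q K); try lia. rewrite Bool.andb_false_r; auto.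
  - intros p Hp. rewrite (cs_ext _ _ (fun _ => RtoC 0)). apply cs_zero.
    intros q _. destruct (Nat.ltb_spec p K); try lia. auto.
Qed.

Lemma rs_sep N c1 c2 f g : rs N (fun q => c1 * f q + c2 * g q) = c1 * rs N f + c2 * rs N g.
Proof. rewrite rs_plus, !rs_mult_l. auto. Qed.

Lemma nn3 a b c : 0 <= a -> 0 <= b -> 0 <= c -> 0 <= a * b * c.
Proof. intros. apply Rmult_le_pos; auto. apply Rmult_le_pos; auto. Qed.

Lemma Q_diff T A Z K N w : 0 <= A -> 0 <= Z -> (forall p q, Cmod (T p q) <= A * expt Z p * expt Z q) ->
  (K <= N)%nat -> (forall p q, (p < K)%nat -> (q < K)%nat -> w p q = true) ->
  Cmod (Cminus (Q T N w) (Qall T K)) <= 2 * A * exp Z * (exp Z - rs K (expt Z)).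
Proof.
  intros HA HZ HT HK Hw. rewrite <- (Q_sq T K N HK). unfold Q. rewrite cs_minus.
  set (x := fun p => if Nat.leb K p then expt Z p else 0).
  assert (Hx : forall p, 0 <= x p). { intros p. unfold x. destruct (Nat.leb K p). apply expt_nonneg; auto. lra. }
  assert (He : forall p, 0 <= expt Z p) by (intros; apply expt_nonneg; auto).
  eapply Rle_trans. apply cs_norm.
  eapply Rle_trans. apply rs_le. intros p _. rewrite cs_minus. apply cs_norm.
  apply Rle_trans with (rs N (fun p => rs N (fun q => A * expt Z p * x q + A * x p * expt Z q))).
  - apply rs_le. intros p _. apply rs_le. intros q _.
    assert (Hd : Cmod (Cminus (if w p q then T p q else RtoC 0) (if Nat.ltb p K && Nat.ltb q K then T p q else RtoC 0))
       <= if Nat.ltb p K && Nat.ltb q K then 0 else A * expt Z p * expt Z q).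
    { destruct (Nat.ltb_spec p K); destruct (Nat.ltb_spec q K); cbn [andb].
      - rewrite Hw; auto. replace (Cminus (T p q) (T p q)) with (RtoC 0) by ring. rewrite Cmod_0. lra.
      - destruct (w p q). replace (Cminus (T p q) (RtoC 0)) with (T p q) by ring. auto.
        replace (Cminus (RtoC 0) (RtoC 0)) with (RtoC 0) by ring. rewrite Cmod_0.
        apply nn3; auto.
      - destruct (w p q). replace (Cminus (T p q) (RtoC 0)) with (T p q) by ring. auto.
        replace (Cminus (RtoC 0) (RtoC 0)) with (RtoC 0) by ring. rewrite Cmod_0.
        apply nn3; auto.
      - destruct (w p q). replace (Cminus (T p q) (RtoC 0)) with (T p q) by ring. auto.
        replace (Cminus (RtoC 0) (RtoC 0)) with (RtoC 0) by ring. rewrite Cmod_0.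
        apply nn3; auto. }
    eapply Rle_trans. apply Hd. pose proof (He p); pose proof (He q).
    unfold x. destruct (Nat.ltb_spec p K); destruct (Nat.ltb_spec q K); destruct (Nat.leb_spec K p); destruct (Nat.leb_spec K q); try lia; simpl;
    try (apply Rplus_le_le_0_compat; apply nn3; auto; lra);
    (assert (0 <= A * expt Z p * expt Z q) by (apply nn3; auto); lra).
  - rewrite (rs_ext _ _ (fun p => (A * expt Z p) * rs N x + (A * x p) * rs N (expt Z))).
    2:{ intros p _. rewrite <- rs_sep. apply rs_ext. intros; ring. }
    rewrite (rs_ext _ _ (fun p => (A * rs N x) * expt Z p + (A * rs N (expt Z)) * x p)) by (intros; ring).
    rewrite rs_sep.
    pose proof (rs_ind_tail Z N K HZ). fold x in H.
    pose proof (rs_expt_le Z N HZ).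
    pose proof (rs_nonneg N x (fun i _ => Hx i)). pose proof (rs_nonneg N (expt Z) (fun i _ => He i)).
    assert (A * rs N x * rs N (expt Z) <= A * exp Z * (exp Z - rs K (expt Z))).
    { rewrite Rmult_assoc, (Rmult_assoc A (exp Z)). apply Rmult_le_compat_l; auto.
      rewrite Rmult_comm. apply Rmult_le_compat; auto. }
    assert (A * rs N (expt Z) * rs N x <= A * exp Z * (exp Z - rs K (expt Z))).
    { rewrite Rmult_assoc, (Rmult_assoc A (exp Z)). apply Rmult_le_compat_l; auto.
      apply Rmult_le_compat; auto. }
    lra.
Qed.

Definition Dg (T : nat -> nat -> C) N : C := cs N (fun j => cs (S j) (fun p => T p (j - p)%nat)).

Lemma D_Q T N : Dg T N = Q T N (fun p q => Nat.ltb (p + q) N).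
Proof.
  induction N. reflexivity.
  unfold Dg. change (cs (S N) (fun j => cs (S j) (fun p => T p (j - p)%nat))) with
    (Cplus (Dg T N) (cs (S N) (fun p => T p (N - p)%nat))).
  rewrite IHN. unfold Q.
  rewrite (cs_ext (S N) (fun p => cs (S N) (fun q => if Nat.ltb (p + q) (S N) then T p q else RtoC 0))
     (fun p => Cplus (cs (S N) (fun q => if Nat.ltb (p + q) N then T p q else RtoC 0))
                                       (cs (S N) (fun q => if Nat.eqb q (N - p) then T p q else RtoC 0)))).
  - rewrite cs_plus. f_equal.
    + symmetry. rewrite (cs_extend N (S N) (fun p => cs (S N) (fun q => if Nat.ltb (p + q) N then T p q else RtoC 0))).
      * apply cs_ext. intros p Hp. apply cs_extend. lia. intros q Hq. destruct (Nat.ltb_spec (p+q) N); auto; lia.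
      * lia.
      * intros p Hp. rewrite (cs_ext _ _ (fun _ => RtoC 0)). apply cs_zero. intros q _. destruct (Nat.ltb_spec (p+q) N); auto; lia.
    + apply cs_ext. intros p Hp. rewrite cs_delta. destruct (Nat.ltb_spec (N - p) (S N)); auto; lia.
  - intros p Hp. rewrite <- cs_plus. apply cs_ext. intros q Hq.
    destruct (Nat.ltb_spec (p+q) (S N)); destruct (Nat.ltb_spec (p+q) N); destruct (Nat.eqb_spec q (N - p)); try lia; ring.
Qed.

Lemma range_delta (f : nat -> C) p M N : (p + M <= N)%nat ->
  cs M (fun m => f (p + m)%nat) = cs N (fun q => if Nat.leb p q && Nat.ltb q (p + M) then f q else RtoC 0).
Proof.
  induction M; intros H.
  - simpl. rewrite (cs_ext _ _ (fun _ => RtoC 0)). symmetry; apply cs_zero.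
    intros q _. destruct (Nat.leb_spec p q); destruct (Nat.ltb_spec q (p + 0)); simpl; auto; lia.
  - simpl. rewrite IHM by lia.
    rewrite (cs_ext N (fun q => if Nat.leb p q && Nat.ltb q (p + S M) then f q else RtoC 0)
       (fun q => Cplus (if Nat.leb p q && Nat.ltb q (p + M) then f q else RtoC 0) (if Nat.eqb q (p + M) then f q else RtoC 0))).
    rewrite cs_plus, cs_delta. destruct (Nat.ltb_spec (p + M) N); try lia. auto.
    intros q _. destruct (Nat.leb_spec p q); destruct (Nat.ltb_spec q (p + S M)); destruct (Nat.ltb_spec q (p + M));
      destruct (Nat.eqb_spec q (p + M)); simpl; try lia; try ring.
Qed.

Definition RPs (T : nat -> nat -> C) M : C := cs M (fun m => cs M (fun p => T p (p + m)%nat)).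
Definition RNs (T : nat -> nat -> C) M : C := cs M (fun n => cs M (fun q => T (q + n + 1)%nat q)).

Lemma RP_Q T M : RPs T M = Q T (2 * M + 1) (fun p q => Nat.ltb p M && (Nat.leb p q && Nat.ltb q (p + M))).
Proof.
  unfold RPs, Q. rewrite cs_swap.
  rewrite (cs_extend M (2 * M + 1)); try lia.
  - apply cs_ext. intros p Hp. rewrite (range_delta (fun q => T p q) p M (2 * M + 1)) by lia.
    apply cs_ext. intros q _. destruct (Nat.ltb_spec p M); try lia. reflexivity.
  - intros p Hp. rewrite (cs_ext _ _ (fun _ => RtoC 0)). apply cs_zero. intros q _. destruct (Nat.ltb_spec p M); auto; lia.
Qed.

Lemma RN_Q T M : RNs T M = Q T (2 * M + 1) (fun p q => Nat.ltb q M && (Nat.leb (q + 1) p && Nat.ltb p (q + 1 + M))).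
Proof.
  unfold RNs, Q. rewrite cs_swap.
  rewrite (cs_ext M _ (fun q => cs (2 * M + 1) (fun p => if Nat.ltb q M && (Nat.leb (q + 1) p && Nat.ltb p (q + 1 + M)) then T p q else RtoC 0))).
  - rewrite <- (cs_extend M (2 * M + 1) (fun q => cs (2 * M + 1) (fun p => if Nat.ltb q M && (Nat.leb (q + 1) p && Nat.ltb p (q + 1 + M)) then T p q else RtoC 0))).
    + apply cs_swap.
    + lia.
    + intros q Hq. rewrite (cs_ext _ _ (fun _ => RtoC 0)). apply cs_zero. intros p _. destruct (Nat.ltb_spec q M); auto; lia.
  - intros q Hq. rewrite (cs_ext M _ (fun n => T (q + 1 + n)%nat q)) by (intros; f_equal; lia).
    rewrite (range_delta (fun p => T p q) (q + 1) M (2 * M + 1)) by lia.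
    apply cs_ext. intros p _. destruct (Nat.ltb_spec q M); try lia. reflexivity.
Qed.

Lemma Q_add T N w1 w2 : (forall p q, w1 p q && w2 p q = false) ->
  Cplus (Q T N w1) (Q T N w2) = Q T N (fun p q => w1 p q || w2 p q).
Proof.
  intros H. unfold Q. rewrite <- cs_plus. apply cs_ext. intros p _. rewrite <- cs_plus. apply cs_ext. intros q _.
  specialize (H p q). destruct (w1 p q); destruct (w2 p q); simpl in *; try discriminate; ring.
Qed.

Local Open Scope bool_scope.

Lemma rows_err_p T A Z M rp : 0 <= A -> 0 <= Z -> (forall p q, Cmod (T p q) <= A * expt Z p * expt Z q) ->
  (forall m, convC (fun n => cs n (fun p => T p (p + m)%nat)) (rp m)) ->
  Cmod (Cminus (cs M rp) (RPs T M)) <= A * exp Z * exp Z * (exp Z - rs M (expt Z)).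
Proof.
  intros HA HZ HT Hr. unfold RPs. rewrite cs_minus.
  eapply Rle_trans. apply cs_norm.
  apply Rle_trans with (rs M (fun m => (A * exp Z * expt Z m) * (exp Z - rs M (expt Z)))).
  - apply rs_le. intros m _.
    replace ((A * exp Z * expt Z m) * (exp Z - rs M (expt Z))) with
      ((A * exp Z * expt Z m) * exp Z - rs M (fun p => (A * exp Z * expt Z m) * expt Z p)) by (rewrite rs_mult_l; ring).
    apply tail_bound; auto.
    + intros p. eapply Rle_trans. apply HT. pose proof (expt_add Z p m HZ). pose proof (expt_le_exp Z p HZ).
      pose proof (expt_nonneg Z p HZ). pose proof (expt_nonneg Z m HZ). pose proof (expt_nonneg Z (p+m) HZ).
      apply Rle_trans with (A * expt Z p * (expt Z p * expt Z m)).
      apply Rmult_le_compat_l; [apply Rmult_le_pos; auto | auto].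
      replace (A * expt Z p * (expt Z p * expt Z m)) with ((A * expt Z m * expt Z p) * expt Z p) by ring.
      replace (A * exp Z * expt Z m * expt Z p) with ((A * expt Z m * expt Z p) * exp Z) by ring.
      apply Rmult_le_compat_l; auto. apply nn3; auto.
    + intros p0. pose proof (expt_nonneg Z p0 HZ). pose proof (expt_nonneg Z m HZ). pose proof (exp_pos Z).
      apply Rmult_le_pos; [apply nn3|]; auto; lra.
    + apply conv_expt_scal.
  - rewrite (rs_ext _ _ (fun m => (A * exp Z * (exp Z - rs M (expt Z))) * expt Z m)) by (intros; ring).
    rewrite rs_mult_l. pose proof (rs_expt_le Z M HZ). pose proof (tail_nonneg Z M HZ).
    pose proof (exp_pos Z).
    replace (A * exp Z * exp Z * (exp Z - rs M (expt Z))) with ((A * exp Z * (exp Z - rs M (expt Z))) * exp Z) by ring.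
    apply Rmult_le_compat_l; auto. apply nn3; lra.
Qed.

Lemma rows_err_n T A Z M rn : 0 <= A -> 0 <= Z -> (forall p q, Cmod (T p q) <= A * expt Z p * expt Z q) ->
  (forall n, convC (fun k => cs k (fun q => T (q + n + 1)%nat q)) (rn n)) ->
  Cmod (Cminus (cs M rn) (RNs T M)) <= A * exp Z * Z * exp Z * (exp Z - rs M (expt Z)).
Proof.
  intros HA HZ HT Hr. unfold RNs. rewrite cs_minus.
  eapply Rle_trans. apply cs_norm.
  apply Rle_trans with (rs M (fun n => (A * exp Z * Z * expt Z n) * (exp Z - rs M (expt Z)))).
  - apply rs_le. intros n _.
    replace ((A * exp Z * Z * expt Z n) * (exp Z - rs M (expt Z))) with
      ((A * exp Z * Z * expt Z n) * exp Z - rs M (fun p => (A * exp Z * Z * expt Z n) * expt Z p)) by (rewrite rs_mult_l; ring).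
    apply tail_bound; auto.
    + intros q. eapply Rle_trans. apply HT. replace (q + n + 1)%nat with (q + S n)%nat by lia.
      pose proof (expt_add Z q (S n) HZ). pose proof (expt_le_exp Z q HZ). pose proof (expt_S Z n HZ).
      pose proof (expt_nonneg Z q HZ). pose proof (expt_nonneg Z n HZ). pose proof (expt_nonneg Z (S n) HZ).
      pose proof (expt_nonneg Z (q + S n) HZ).
      apply Rle_trans with (A * (expt Z q * (Z * expt Z n)) * expt Z q).
      apply Rmult_le_compat_r; auto. apply Rmult_le_compat_l; auto. eapply Rle_trans. apply H.
      apply Rmult_le_compat_l; auto.
      replace (A * (expt Z q * (Z * expt Z n)) * expt Z q) with ((A * Z * expt Z n * expt Z q) * expt Z q) by ring.
      replace (A * exp Z * Z * expt Z n * expt Z q) with ((A * Z * expt Z n * expt Z q) * exp Z) by ring.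
      apply Rmult_le_compat_l; auto. apply Rmult_le_pos; [apply nn3|]; auto.
    + intros p0. pose proof (expt_nonneg Z p0 HZ). pose proof (expt_nonneg Z n HZ). pose proof (exp_pos Z).
      apply Rmult_le_pos; [apply Rmult_le_pos; [apply nn3|]|]; auto; lra.
    + apply conv_expt_scal.
  - rewrite (rs_ext _ _ (fun n => (A * exp Z * Z * (exp Z - rs M (expt Z))) * expt Z n)) by (intros; ring).
    rewrite rs_mult_l. pose proof (rs_expt_le Z M HZ). pose proof (tail_nonneg Z M HZ).
    pose proof (exp_pos Z).
    replace (A * exp Z * Z * exp Z * (exp Z - rs M (expt Z))) with ((A * exp Z * Z * (exp Z - rs M (expt Z))) * exp Z) by ring.
    apply Rmult_le_compat_l; auto. apply Rmult_le_pos; [apply nn3|]; lra.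
Qed.

Lemma tri6 a b c d e f : Cmod (Cplus (Cplus a (Copp b)) (Cplus (Cplus (Copp c) (Copp d)) (Cplus e f))) <=
  Cmod a + Cmod b + Cmod c + Cmod d + Cmod e + Cmod f.
Proof.
  eapply Rle_trans. apply Cmod_triangle. 
  pose proof (Cmod_triangle a (Copp b)). pose proof (Cmod_triangle (Cplus (Copp c) (Copp d)) (Cplus e f)).
  pose proof (Cmod_triangle (Copp c) (Copp d)). pose proof (Cmod_triangle e f). rewrite !Cmod_opp in *. lra.
Qed.

Lemma tail_small Z eps : 0 < eps -> exists N, forall n, (N <= n)%nat -> exp Z - rs n (expt Z) < eps.
Proof. apply exp_tail_conv. Qed.

Theorem DS T A Z rp rn sp sn : 0 <= A -> 0 <= Z -> (forall p q, Cmod (T p q) <= A * expt Z p * expt Z q) ->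
  (forall m, convC (fun n => cs n (fun p => T p (p + m)%nat)) (rp m)) ->
  (forall n, convC (fun k => cs k (fun q => T (q + n + 1)%nat q)) (rn n)) ->
  convC (fun n => cs n rp) sp -> convC (fun n => cs n rn) sn ->
  convC (Dg T) (Cplus sp sn).
Proof.
  intros HA HZ HT Hp Hn Hsp Hsn eps He.
  set (c := 2 * A * exp Z + A * exp Z * exp Z + A * exp Z * Z * exp Z + 1).
  assert (Hc : 0 < c). { unfold c. pose proof (exp_pos Z). assert (0 <= A * exp Z) by (apply Rmult_le_pos; lra).
    assert (0 <= A * exp Z * exp Z) by (apply Rmult_le_pos; lra).
    assert (0 <= A * exp Z * Z * exp Z) by (apply Rmult_le_pos; [apply nn3|]; lra). lra. }
  destruct (tail_small Z (eps / 4 / c)) as [N0 HN0]. apply Rdiv_lt_0_compat; lra.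
  destruct (Hsp (eps/4) ltac:(lra)) as [N1 HN1]. destruct (Hsn (eps/4) ltac:(lra)) as [N2 HN2].
  exists (2 * (N0 + N1 + N2))%nat. intros J HJ.
  set (K := Nat.div2 J).
  assert (HK2 : (2 * K <= J)%nat). { unfold K. pose proof (Nat.div2_odd J). destruct (Nat.odd J); simpl in *; lia. }
  assert (HK : (N0 + N1 + N2 <= K)%nat). { unfold K. pose proof (Nat.div2_odd J). destruct (Nat.odd J); simpl in *; lia. }
  specialize (HN0 K ltac:(lia)). specialize (HN1 K ltac:(lia)). specialize (HN2 K ltac:(lia)).
  set (t := exp Z - rs K (expt Z)) in *.
  assert (Ht : 0 <= t) by (apply tail_nonneg; auto).
  assert (E1 : Cmod (Cminus (Dg T J) (Qall T K)) <= 2 * A * exp Z * t).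
  { rewrite D_Q. apply Q_diff; auto. lia. intros p q Hp' Hq'. destruct (Nat.ltb_spec (p + q) J); auto; lia. }
  set (w := fun p q => (Nat.ltb p K && (Nat.leb p q && Nat.ltb q (p + K))) || (Nat.ltb q K && (Nat.leb (q + 1) p && Nat.ltb p (q + 1 + K)))).
  assert (E2 : Cplus (RPs T K) (RNs T K) = Q T (2 * K + 1) w).
  { rewrite RP_Q, RN_Q. apply Q_add. intros p q. destruct (Nat.leb_spec p q); destruct (Nat.leb_spec (q + 1) p); simpl;
      rewrite ?Bool.andb_false_r; auto; lia. }
  assert (E3 : Cmod (Cminus (Q T (2 * K + 1) w) (Qall T K)) <= 2 * A * exp Z * t).
  { apply Q_diff; auto. lia. intros p q Hp' Hq'. unfold w.
    destruct (Nat.leb_spec p q).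
    - destruct (Nat.ltb_spec p K); destruct (Nat.leb_spec p q); destruct (Nat.ltb_spec q (p + K)); simpl; auto; lia.
    - destruct (Nat.ltb_spec q K); destruct (Nat.leb_spec (q+1) p); destruct (Nat.ltb_spec p (q + 1 + K)); simpl;
        rewrite ?Bool.orb_true_r; auto; lia. }
  assert (E4 : Cmod (Cminus (cs K rp) (RPs T K)) <= A * exp Z * exp Z * t) by (apply rows_err_p; auto).
  assert (E5 : Cmod (Cminus (cs K rn) (RNs T K)) <= A * exp Z * Z * exp Z * t) by (apply rows_err_n; auto).
  assert (Hct : c * t <= eps / 4).
  { assert (c * t < c * (eps / 4 / c)) by (apply Rmult_lt_compat_l; auto).
    replace (c * (eps / 4 / c)) with (eps / 4) in H by (field; lra). lra. }
  assert (Hsum : 2 * A * exp Z * t + 2 * A * exp Z * t + A * exp Z * exp Z * t + A * exp Z * Z * exp Z * t <= 2 * (c * t)).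
  { unfold c. pose proof (exp_pos Z).
    assert (0 <= A * exp Z * exp Z * t) by (apply Rmult_le_pos; [apply nn3|]; lra).
    assert (0 <= A * exp Z * Z * exp Z * t) by (apply Rmult_le_pos; [apply Rmult_le_pos; [apply nn3|]|]; lra).
    nra. }
  replace (Cminus (Dg T J) (Cplus sp sn)) with
    (Cplus (Cplus (Cminus (Dg T J) (Qall T K)) (Copp (Cminus (Q T (2 * K + 1) w) (Qall T K))))
      (Cplus (Cplus (Copp (Cminus (cs K rp) (RPs T K))) (Copp (Cminus (cs K rn) (RNs T K))))
             (Cplus (Cminus (cs K rp) sp) (Cminus (cs K rn) sn)))).
  2:{ rewrite <- E2. ring. }
  eapply Rle_lt_trans. apply tri6.
  rewrite Cmod_opp in HN1, HN2 || idtac.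
  assert (Cmod (Cminus (cs K rp) sp) < eps / 4) by exact HN1.
  assert (Cmod (Cminus (cs K rn) sn) < eps / 4) by exact HN2.
  lra.
Qed.

Definition Tt (u : R) (g : Z -> C) (p q : nat) : C :=
  Cmult (Cmult (Cpow (Cmult Ci (RtoC u)) (p + q)) (RtoC (/ (INR (fact p) * INR (fact q)))))
        (g (Z.of_nat q - Z.of_nat p)%Z).
Definition cc (u : R) (m : Z) : C := Cmult (Cpowz Ci m) (RtoC (besselJ m (2 * u))).

Lemma Tt_bound u g G p q : (forall m, Cmod (g m) <= G) -> Cmod (Tt u g p q) <= G * expt (Rabs u) p * expt (Rabs u) q.
Proof.
  intros Hg. unfold Tt. rewrite !Cmod_mult, Cmod_pow, Cmod_mult, Cmod_Ci, Cmod_R, Cmod_R, Rmult_1_l.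
  pose proof (fact_pos' p). pose proof (fact_pos' q).
  rewrite (Rabs_right (/ _)). 2: left; apply Rinv_0_lt_compat, Rmult_lt_0_compat; auto.
  unfold expt. rewrite pow_add.
  replace (G * (Rabs u ^ p / INR (fact p)) * (Rabs u ^ q / INR (fact q))) with
    (Rabs u ^ p * Rabs u ^ q * / (INR (fact p) * INR (fact q)) * G) by (field; lra).
  apply Rmult_le_compat_l; auto. apply Rmult_le_pos. apply Rmult_le_pos; apply pow_le, Rabs_pos.
  left; apply Rinv_0_lt_compat, Rmult_lt_0_compat; auto.
Qed.

Lemma convC_RtoC a l : convR (fun n => rs n a) l -> convC (fun n => cs n (fun i => RtoC (a i))) (RtoC l).
Proof.
  intros H eps He. destruct (H eps He) as [N HN]. exists N. intros n Hn. rewrite cs_RtoC.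
  rewrite <- RtoC_minus, Cmod_R. auto.
Qed.
Lemma convC_scal f l k : convC (fun n => cs n f) l -> convC (fun n => cs n (fun i => Cmult k (f i))) (Cmult k l).
Proof.
  intros H eps He. destruct (H (eps / (Cmod k + 1))) as [N HN].
  apply Rdiv_lt_0_compat; auto. pose proof (Cmod_ge_0 k); lra.
  exists N. intros n Hn. specialize (HN n Hn). rewrite cs_mult_l.
  replace (Cminus (Cmult k (cs n f)) (Cmult k l)) with (Cmult k (Cminus (cs n f) l)) by ring.
  rewrite Cmod_mult. pose proof (Cmod_ge_0 k). pose proof (Cmod_ge_0 (Cminus (cs n f) l)).
  apply Rle_lt_trans with (Cmod k * (eps / (Cmod k + 1))). apply Rmult_le_compat_l; lra.
  apply Rmult_lt_reg_r with (Cmod k + 1). lra.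
  replace (Cmod k * (eps / (Cmod k + 1)) * (Cmod k + 1)) with (Cmod k * eps) by (field; lra). nra.
Qed.
Lemma convC_ext f g l : (forall i, f i = g i) -> convC (fun n => cs n f) l -> convC (fun n => cs n g) l.
Proof. intros E H. replace g with f; auto. apply functional_extensionality; auto. Qed.

Lemma ex_series_of_conv a l : convR (fun n => rs n a) l -> ex_series a.
Proof. intros H. exists l. apply is_seriesR_conv; auto. Qed.
Lemma convR_of_ex a : ex_series a -> convR (fun n => rs n a) (Series a).
Proof. intros H. apply is_seriesR_conv. apply Series_correct; auto. Qed.

Definition bt (u : R) (m p : nat) : R := (-1) ^ p / (INR (fact p) * INR (fact (p + m))) * u ^ (2 * p + m).

Lemma bt_conv u m : convR (fun n => rs n (bt u m)) (besselJ_nat m (2 * u)).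
Proof.
  unfold besselJ_nat. rewrite (Series_ext _ (bt u m)).
  2:{ intros k. unfold bt. f_equal. f_equal. field. }
  apply convR_of_ex.
  apply (ex_series_le (V := R_CompleteNormedModule) _ (fun p => (exp (Rabs u) * expt (Rabs u) m) * expt (Rabs u) p)).
  - intros p. change (norm (bt u m p)) with (Rabs (bt u m p)). unfold bt.
    pose proof (fact_pos' p). pose proof (fact_pos' (p + m)).
    rewrite Rabs_mult. unfold Rdiv. rewrite Rabs_mult, pow_1_abs, Rmult_1_l, <- RPow_abs.
    rewrite Rabs_right. 2: left; apply Rinv_0_lt_compat, Rmult_lt_0_compat; auto.
    replace (2 * p + m)%nat with (p + (p + m))%nat by lia. rewrite pow_add.
    pose proof (expt_add (Rabs u) p m (Rabs_pos _)). pose proof (expt_le_exp (Rabs u) p (Rabs_pos _)).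
    pose proof (expt_nonneg (Rabs u) p (Rabs_pos _)). pose proof (expt_nonneg (Rabs u) m (Rabs_pos _)).
    pose proof (expt_nonneg (Rabs u) (p + m) (Rabs_pos _)).
    replace (/ (INR (fact p) * INR (fact (p + m))) * (Rabs u ^ p * Rabs u ^ (p + m))) with (expt (Rabs u) p * expt (Rabs u) (p + m))
      by (unfold expt; field; lra).
    apply Rle_trans with (expt (Rabs u) p * (expt (Rabs u) p * expt (Rabs u) m)).
    apply Rmult_le_compat_l; auto.
    replace (expt (Rabs u) p * (expt (Rabs u) p * expt (Rabs u) m)) with ((expt (Rabs u) m * expt (Rabs u) p) * expt (Rabs u) p) by ring.
    replace (exp (Rabs u) * expt (Rabs u) m * expt (Rabs u) p) with ((expt (Rabs u) m * expt (Rabs u) p) * exp (Rabs u)) by ring.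
    apply Rmult_le_compat_l; auto. apply Rmult_le_pos; auto.
  - eapply ex_series_of_conv. apply conv_expt_scal.
Qed.

Lemma Ci_pow_2p m p : Cpow Ci (2 * p + m) = Cmult (Cpow Ci m) (RtoC ((-1) ^ p)).
Proof.
  rewrite Cpow_add_r, Cpow_mult_r. replace (Cpow Ci 2) with (RtoC (-1)) by (apply injective_projections; simpl; ring).
  rewrite <- RtoC_pow. ring.
Qed.

Lemma row_plus u g m : convC (fun n => cs n (fun p => Tt u g p (p + m)%nat)) (Cmult (cc u (Z.of_nat m)) (g (Z.of_nat m))).
Proof.
  apply (convC_ext (fun p => Cmult (Cmult (Cpow Ci m) (g (Z.of_nat m))) (RtoC (bt u m p)))).
  - intros p. unfold Tt, bt. replace (Z.of_nat (p + m) - Z.of_nat p)%Z with (Z.of_nat m) by lia.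
    replace (p + (p + m))%nat with (2 * p + m)%nat by lia.
    rewrite Cpow_mult_l, Ci_pow_2p, <- RtoC_pow. rewrite !RtoC_mult. unfold Rdiv. rewrite RtoC_mult. ring.
  - replace (Cmult (cc u (Z.of_nat m)) (g (Z.of_nat m))) with (Cmult (Cmult (Cpow Ci m) (g (Z.of_nat m))) (RtoC (besselJ_nat m (2 * u)))).
    + apply convC_scal. apply convC_RtoC. apply bt_conv.
    + unfold cc, Cpowz, besselJ. destruct (Z.leb_spec 0 (Z.of_nat m)); try lia. rewrite Nat2Z.id. ring.
Qed.

Lemma Ci_pow_sq k : Cmult (Cpow Ci k) (Cpow Ci k) = RtoC ((-1) ^ k).
Proof. rewrite <- Cpow_mult_l. replace (Cmult Ci Ci) with (RtoC (-1)) by (apply injective_projections; simpl; ring).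
  rewrite RtoC_pow. auto. Qed.

Lemma row_minus u g n : convC (fun k => cs k (fun q => Tt u g (q + n + 1)%nat q))
   (Cmult (cc u (- Z.of_nat (S n))%Z) (g (- Z.of_nat (S n))%Z)).
Proof.
  apply (convC_ext (fun q => Cmult (Cmult (Cpow Ci (S n)) (g (- Z.of_nat (S n))%Z)) (RtoC (bt u (S n) q)))).
  - intros q. unfold Tt, bt. replace (Z.of_nat q - Z.of_nat (q + n + 1))%Z with (- Z.of_nat (S n))%Z by lia.
    replace (q + n + 1 + q)%nat with (2 * q + S n)%nat by lia.
    rewrite Cpow_mult_l, Ci_pow_2p, <- RtoC_pow. replace (q + S n)%nat with (q + n + 1)%nat by lia.
    rewrite (Rmult_comm (INR (fact (q + n + 1))) (INR (fact q))). unfold Rdiv. rewrite !RtoC_mult. ring.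
  - replace (Cmult (cc u (- Z.of_nat (S n))%Z) (g (- Z.of_nat (S n))%Z)) with
      (Cmult (Cmult (Cpow Ci (S n)) (g (- Z.of_nat (S n))%Z)) (RtoC (besselJ_nat (S n) (2 * u)))).
    + apply convC_scal. apply convC_RtoC. apply bt_conv.
    + unfold cc, Cpowz, besselJ. destruct (Z.leb_spec 0 (- Z.of_nat (S n))); try lia.
      replace (Z.to_nat (- - Z.of_nat (S n))) with (S n) by lia.
      assert (Hnz : Cpow Ci (S n) <> RtoC 0) by (apply Cpow_nz; intros E; injection E; lra).
      rewrite RtoC_mult, <- Ci_pow_sq. field. auto.
Qed.

Lemma niceC_pow d F j : niceC d F -> niceC d (fun u => Cpow (F u) j).
Proof. intros H. induction j; simpl. apply niceC_const. apply niceC_mult; auto. Qed.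
Lemma Cmod_cis_mult a z : Cmod (Cmult (cis a) z) = Cmod z.
Proof. rewrite Cmod_mult, Cmod_cis. ring. Qed.
Lemma CI_minus d F G : niceC d F -> niceC d G -> Cminus (CI d F) (CI d G) = CI d (fun u => Cminus (F u) (G u)).
Proof.
  intros HF HG. unfold Cminus.
  rewrite (CI_ext d (fun u => Cplus (F u) (Copp (G u))) (fun u => Cplus (F u) (Cmult (RtoC (-1)) (G u)))) by (intros; ring).
  rewrite CI_plus, CI_scal; auto. ring. apply niceC_mult; auto. apply niceC_const.
Qed.
Lemma cs_mult_r n f c : cs n (fun i => Cmult (f i) c) = Cmult (cs n f) c.
Proof. rewrite (cs_ext _ _ (fun i => Cmult c (f i))) by (intros; ring). rewrite cs_mult_l. ring. Qed.

Lemma niceC_cisH d om Hh r : Lip d om -> niceC d Hh -> niceC d (fun th => Cmult (cis (r * om th)) (Hh th)).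
Proof. intros. apply niceC_mult; auto. apply niceC_cis. apply Lip_scal; auto. Qed.
Lemma Lip_cosom d om c : Lip d om -> Lip d (fun th => c * cos (om th)).
Proof. intros. apply Lip_scal. apply Lip_nice, nice_cos; auto. Qed.
Lemma niceC_ecoefH d om Hh u j : Lip d om -> niceC d Hh ->
  niceC d (fun th => Cmult (ecoef (2 * u * cos (om th)) j) (Hh th)).
Proof.
  intros. apply niceC_mult; auto. unfold ecoef. apply niceC_mult. apply niceC_pow. apply niceC_mult.
  apply niceC_const. apply niceC_RtoC. apply nice_ext with (fun th => (2 * u) * cos (om th)). intros; ring.
  apply nice_scal, nice_cos; auto. apply niceC_const.
Qed.

Lemma ecoef_expand u w j : ecoef (2 * u * cos w) j =
  cs (S j) (fun p => Cmult (Cmult (Cpow (Cmult Ci (RtoC u)) j) (RtoC (bc j p))) (cis ((INR j - 2 * INR p) * w))).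
Proof.
  unfold ecoef. replace (Cmult Ci (RtoC (2 * u * cos w))) with (Cmult (Cmult Ci (RtoC u)) (RtoC (2 * cos w)))
    by (apply injective_projections; simpl; ring).
  rewrite Cpow_mult_l, <- RtoC_pow.
  transitivity (Cmult (Cpow (Cmult Ci (RtoC u)) j) (RtoC ((2 * cos w) ^ j / INR (fact j)))).
  { unfold Rdiv. rewrite RtoC_mult. ring. }
  rewrite binom_cis. rewrite <- cs_mult_l. apply cs_ext. intros p _. unfold bterm. ring.
Qed.

Lemma IZR_diff j p : (p <= j)%nat -> IZR (Z.of_nat (j - p) - Z.of_nat p) = INR j - 2 * INR p.
Proof. intros H. rewrite minus_IZR, <- !INR_IZR_INZ, minus_INR; auto. ring. Qed.

Lemma Dg_CI d om Hh u N : Lip d om -> niceC d Hh ->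
  Dg (Tt u (fun m => CI d (fun th => Cmult (cis (IZR m * om th)) (Hh th)))) N =
  CI d (fun th => Cmult (cs N (ecoef (2 * u * cos (om th)))) (Hh th)).
Proof.
  intros Hom HH.
  rewrite (CI_ext _ _ (fun th => cs N (fun j => Cmult (ecoef (2 * u * cos (om th)) j) (Hh th)))) by (intros; rewrite cs_mult_r; auto).
  rewrite CI_cs by (intros; apply niceC_ecoefH; auto).
  unfold Dg. apply cs_ext. intros j _.
  rewrite (CI_ext _ _ (fun th => cs (S j) (fun p => Cmult (Cmult (Cpow (Cmult Ci (RtoC u)) j) (RtoC (bc j p)))
              (Cmult (cis ((INR j - 2 * INR p) * om th)) (Hh th))))).
  2:{ intros th. rewrite ecoef_expand, <- cs_mult_r. apply cs_ext. intros; ring. }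
  rewrite CI_cs. 2:{ intros p. apply niceC_mult; [apply niceC_const | apply niceC_cisH; auto]. }
  apply cs_ext. intros p Hp. rewrite CI_scal by (apply niceC_cisH; auto).
  unfold Tt. replace (p + (j - p))%nat with j by lia. unfold bc. rewrite IZR_diff by lia. reflexivity.
Qed.

Lemma row_maj_p T A Z p m : 0 <= A -> 0 <= Z -> (forall p q, Cmod (T p q) <= A * expt Z p * expt Z q) ->
  Cmod (T p (p + m)%nat) <= (A * exp Z * expt Z m) * expt Z p.
Proof.
  intros HA HZ HT. eapply Rle_trans. apply HT. pose proof (expt_add Z p m HZ). pose proof (expt_le_exp Z p HZ).
  pose proof (expt_nonneg Z p HZ). pose proof (expt_nonneg Z m HZ). pose proof (expt_nonneg Z (p+m) HZ).
  apply Rle_trans with (A * expt Z p * (expt Z p * expt Z m)).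
  apply Rmult_le_compat_l; [apply Rmult_le_pos; auto | auto].
  replace (A * expt Z p * (expt Z p * expt Z m)) with ((A * expt Z m * expt Z p) * expt Z p) by ring.
  replace (A * exp Z * expt Z m * expt Z p) with ((A * expt Z m * expt Z p) * exp Z) by ring.
  apply Rmult_le_compat_l; auto. apply nn3; auto.
Qed.
Lemma row_maj_n T A Z q n : 0 <= A -> 0 <= Z -> (forall p q, Cmod (T p q) <= A * expt Z p * expt Z q) ->
  Cmod (T (q + n + 1)%nat q) <= (A * exp Z * Z * expt Z n) * expt Z q.
Proof.
  intros HA HZ HT. eapply Rle_trans. apply HT. replace (q + n + 1)%nat with (q + S n)%nat by lia.
  pose proof (expt_add Z q (S n) HZ). pose proof (expt_le_exp Z q HZ). pose proof (expt_S Z n HZ).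
  pose proof (expt_nonneg Z q HZ). pose proof (expt_nonneg Z n HZ). pose proof (expt_nonneg Z (S n) HZ).
  pose proof (expt_nonneg Z (q + S n) HZ).
  apply Rle_trans with (A * (expt Z q * (Z * expt Z n)) * expt Z q).
  apply Rmult_le_compat_r; auto. apply Rmult_le_compat_l; auto. eapply Rle_trans. apply H.
  apply Rmult_le_compat_l; auto.
  replace (A * (expt Z q * (Z * expt Z n)) * expt Z q) with ((A * Z * expt Z n * expt Z q) * expt Z q) by ring.
  replace (A * exp Z * Z * expt Z n * expt Z q) with ((A * Z * expt Z n * expt Z q) * exp Z) by ring.
  apply Rmult_le_compat_l; auto. apply Rmult_le_pos; [apply nn3|]; auto.
Qed.

Lemma sum_exists (r : nat -> C) c Z : 0 <= Z -> (forall m, Cmod (r m) <= c * expt Z m) ->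
  ex_series (fun m => Cmod (r m)) /\ exists s, convC (fun n => cs n r) s.
Proof.
  intros HZ Hr. assert (Hb : ex_series (fun m => c * expt Z m)) by (eapply ex_series_of_conv; apply conv_expt_scal).
  split.
  - apply (ex_series_le (V := R_CompleteNormedModule) _ (fun m => c * expt Z m)); auto.
    intros m. change (norm (Cmod (r m))) with (Rabs (Cmod (r m))). rewrite Rabs_right; auto. apply Rle_ge, Cmod_ge_0.
  - assert (ex_series (V := C_NormedModule) r).
    { apply (ex_series_le (V := C_CompleteNormedModule) r (fun m => c * expt Z m)); auto. }
    destruct H as [s Hs]. exists s. apply is_seriesC_conv; auto.
Qed.

Theorem generic d (om : (nat -> R) -> R) (Hh : (nat -> R) -> C) u MH :
  Lip d om -> niceC d Hh -> (forall th, Cmod (Hh th) <= MH) ->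
  let g := fun m : Z => CI d (fun th => Cmult (cis (IZR m * om th)) (Hh th)) in
  exists sp sn,
   convC (fun n => cs n (fun m => Cmult (cc u (Z.of_nat m)) (g (Z.of_nat m)))) sp /\
   convC (fun n => cs n (fun k => Cmult (cc u (- Z.of_nat (S k))%Z) (g (- Z.of_nat (S k))%Z))) sn /\
   ex_series (fun m => Cmod (Cmult (cc u (Z.of_nat m)) (g (Z.of_nat m)))) /\
   ex_series (fun k => Cmod (Cmult (cc u (- Z.of_nat (S k))%Z) (g (- Z.of_nat (S k))%Z))) /\
   CI d (fun th => Cmult (cis (2 * u * cos (om th))) (Hh th)) = Cplus sp sn.
Proof.
  intros Hom HH HM g.
  assert (HM0 : 0 <= MH). { pose proof (HM (fun _ => 0)). pose proof (Cmod_ge_0 (Hh (fun _ => 0))). lra. }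
  set (G := 2 * (2 * PI) ^ d * MH).
  assert (HG0 : 0 <= G). { unfold G. pose proof PI_RGT_0. apply nn3; try lra. apply pow_le; lra. }
  assert (Hg : forall m, Cmod (g m) <= G).
  { intros m. unfold g, G. apply CI_bound. apply niceC_cisH; auto. intros th. rewrite Cmod_cis_mult; auto. }
  set (Zu := Rabs u). assert (HZ : 0 <= Zu) by apply Rabs_pos.
  assert (HT : forall p q, Cmod (Tt u g p q) <= G * expt Zu p * expt Zu q) by (intros; apply Tt_bound; auto).
  destruct (sum_exists (fun m => Cmult (cc u (Z.of_nat m)) (g (Z.of_nat m))) (G * exp Zu * exp Zu) Zu HZ) as [Ap [sp Hsp]].
  { intros m. eapply Rle_trans. apply (limit_bound (fun p => Tt u g p (p + m)%nat) _ (fun p => (G * exp Zu * expt Zu m) * expt Zu p) ((G * exp Zu * expt Zu m) * exp Zu)).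
    apply row_plus. intros p. apply row_maj_p; auto.
    intros p. pose proof (expt_nonneg Zu p HZ). pose proof (expt_nonneg Zu m HZ). pose proof (exp_pos Zu).
    apply Rmult_le_pos; [apply nn3|]; auto; lra. apply conv_expt_scal. right; ring. }
  destruct (sum_exists (fun k => Cmult (cc u (- Z.of_nat (S k))%Z) (g (- Z.of_nat (S k))%Z)) (G * exp Zu * Zu * exp Zu) Zu HZ) as [An [sn Hsn]].
  { intros n. eapply Rle_trans. apply (limit_bound (fun q => Tt u g (q + n + 1)%nat q) _ (fun q => (G * exp Zu * Zu * expt Zu n) * expt Zu q) ((G * exp Zu * Zu * expt Zu n) * exp Zu)).
    apply row_minus. intros q. apply row_maj_n; auto.
    intros q. pose proof (expt_nonneg Zu q HZ). pose proof (expt_nonneg Zu n HZ). pose proof (exp_pos Zu).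
    apply Rmult_le_pos; [apply Rmult_le_pos; [apply nn3|]|]; auto; lra. apply conv_expt_scal. right; ring. }
  exists sp, sn. split; auto. split; auto. split; auto. split; auto.
  assert (HD : convC (Dg (Tt u g)) (Cplus sp sn)).
  { apply (DS _ G Zu (fun m => Cmult (cc u (Z.of_nat m)) (g (Z.of_nat m))) (fun k => Cmult (cc u (- Z.of_nat (S k))%Z) (g (- Z.of_nat (S k))%Z))); auto.
    intros m. apply row_plus. intros n. apply row_minus. }
  set (f := fun th => Cmult (cis (2 * u * cos (om th))) (Hh th)).
  assert (Nf : niceC d f). { apply niceC_mult; auto. apply niceC_cis. apply Lip_cosom; auto. }
  assert (NF : forall N, niceC d (fun th => Cmult (cs N (ecoef (2 * u * cos (om th)))) (Hh th))).
  { intros N. apply niceC_ext with (fun th => cs N (fun j => Cmult (ecoef (2 * u * cos (om th)) j) (Hh th))).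
    intros; rewrite cs_mult_r; auto. apply niceC_cs. intros j; apply niceC_ecoefH; auto. }
  assert (HC : convC (Dg (Tt u g)) (CI d f)).
  { intros eps He.
    set (c := 2 * (2 * PI) ^ d * (MH + 1)).
    assert (Hc : 0 < c). { unfold c. pose proof PI_RGT_0. apply Rmult_lt_0_compat. apply Rmult_lt_0_compat. lra. apply pow_lt; lra. lra. }
    destruct (exp_tail_conv (2 * Zu) (eps / c)) as [N0 HN0]. apply Rdiv_lt_0_compat; auto.
    exists N0. intros N HN. unfold g. rewrite Dg_CI; auto.
    rewrite <- Cmod_opp. replace (Copp _) with (Cminus (CI d f) (CI d (fun th => Cmult (cs N (ecoef (2 * u * cos (om th)))) (Hh th)))) by ring.
    rewrite CI_minus; auto.
    set (tl := exp (2 * Zu) - rs N (expt (2 * Zu))) in *. specialize (HN0 N HN).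
    assert (Htl : 0 <= tl) by (apply tail_nonneg; lra).
    eapply Rle_lt_trans. apply (CI_bound d _ (MH * tl)).
    - apply niceC_ext with (fun th => Cplus (f th) (Cmult (RtoC (-1)) (Cmult (cs N (ecoef (2 * u * cos (om th)))) (Hh th)))).
      intros; unfold Cminus; ring. apply niceC_plus; auto. apply niceC_mult; auto. apply niceC_const.
    - intros th. unfold f. replace (Cminus (Cmult (cis (2 * u * cos (om th))) (Hh th)) (Cmult (cs N (ecoef (2 * u * cos (om th)))) (Hh th)))
        with (Cmult (Cminus (cis (2 * u * cos (om th))) (cs N (ecoef (2 * u * cos (om th))))) (Hh th)) by ring.
      rewrite Cmod_mult. rewrite Rmult_comm. apply Rmult_le_compat; auto. apply Cmod_ge_0. apply Cmod_ge_0.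
      apply cis_tail. unfold Zu. rewrite !Rabs_mult. rewrite (Rabs_right 2) by lra.
      pose proof (COS_bound (om th)). assert (Rabs (cos (om th)) <= 1) by (apply Rabs_le; lra).
      pose proof (Rabs_pos u). nra.
    - apply Rle_lt_trans with (2 * (2 * PI) ^ d * (MH + 1) * tl).
      assert (0 <= 2 * (2 * PI) ^ d) by (pose proof PI_RGT_0; apply Rmult_le_pos; [lra | apply pow_le; lra]).
      replace (2 * (2 * PI) ^ d * (MH * tl)) with ((2 * (2 * PI) ^ d) * (MH * tl)) by ring.
      replace (2 * (2 * PI) ^ d * (MH + 1) * tl) with ((2 * (2 * PI) ^ d) * ((MH + 1) * tl)) by ring.
      apply Rmult_le_compat_l; auto. nra.
      fold c. apply Rmult_lt_reg_r with (/ c). apply Rinv_0_lt_compat; auto.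
      replace (c * tl * / c) with tl by (field; lra). auto. }
  symmetry. eapply convC_unique; eauto.
Qed.

Lemma sin_2PIn n : sin (IZR n * (2 * PI)) = 0.
Proof. apply sin_eq_0_1. exists (2 * n)%Z. rewrite mult_IZR. simpl. ring. Qed.
Lemma cos_2PIn n : cos (IZR n * (2 * PI)) = 1.
Proof.
  replace (IZR n * (2 * PI)) with (2 * (IZR n * PI)) by ring. rewrite cos_2a_sin.
  rewrite sin_eq_0_1. ring. exists n; auto.
Qed.

Lemma RIntC_cis n : RIntC (fun t => cis (IZR n * t)) = if Z.eqb n 0 then RtoC (2 * PI) else RtoC 0.
Proof.
  unfold RIntC, cis. simpl. destruct (Z.eqb_spec n 0).
  - subst. simpl. rewrite (RInt_ext (V := R_CompleteNormedModule) _ (fun _ => 1)).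
    rewrite (RInt_ext (V := R_CompleteNormedModule) (fun t => sin (0 * t)) (fun _ => 0)).
    rewrite !(RInt_const (V := R_CompleteNormedModule)). apply injective_projections; simpl; unfold scal; simpl; unfold mult; simpl; ring.
    intros; rewrite Rmult_0_l, sin_0; auto. intros; rewrite Rmult_0_l, cos_0; auto.
  - assert (Hn : IZR n <> 0) by (apply not_0_IZR; auto).
    rewrite (is_RInt_unique (V := R_CompleteNormedModule) (fun t => cos (IZR n * t)) 0 (2 * PI)
       (minus (sin (IZR n * (2 * PI)) / IZR n) (sin (IZR n * 0) / IZR n))).
    rewrite (is_RInt_unique (V := R_CompleteNormedModule) (fun t => sin (IZR n * t)) 0 (2 * PI)
       (minus (- cos (IZR n * (2 * PI)) / IZR n) (- cos (IZR n * 0) / IZR n))).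
    + rewrite sin_2PIn, cos_2PIn, Rmult_0_r, sin_0, cos_0. apply injective_projections; simpl;
      unfold minus, plus, opp; simpl; field; auto.
    + apply (is_RInt_derive (V := R_CompleteNormedModule) (fun t => - cos (IZR n * t) / IZR n)).
      intros x _. auto_derive; auto. field; auto.
      intros x _. apply lip_continuous with (Rabs (IZR n)). intros t s. eapply Rle_trans. apply sin_lip.
      rewrite <- Rabs_mult. right; f_equal; ring.
    + apply (is_RInt_derive (V := R_CompleteNormedModule) (fun t => sin (IZR n * t) / IZR n)).
      intros x _. auto_derive; auto. field; auto.
      intros x _. apply lip_continuous with (Rabs (IZR n)). intros t s. eapply Rle_trans. apply cos_lip.
      rewrite <- Rabs_mult. right; f_equal; ring.
Qed.

Lemma cc_pos_neg u q : cc u (Z.neg q) = cc u (Z.pos q).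
Proof.
  unfold cc, Cpowz, besselJ.
  replace (0 <=? Z.neg q)%Z with false by reflexivity.
  replace (0 <=? Z.pos q)%Z with true by reflexivity.
  replace (- Z.neg q)%Z with (Z.pos q) by reflexivity.
  set (n := Z.to_nat (Z.pos q)).
  assert (Hnz : Cpow Ci n <> RtoC 0) by (apply Cpow_nz; intros E; injection E; lra).
  rewrite RtoC_mult, <- Ci_pow_sq. field. auto.
Qed.
Lemma cc_neg u p : cc u (- p) = cc u p.
Proof. destruct p; simpl; auto. apply cc_pos_neg. symmetry; apply cc_pos_neg. Qed.

Lemma conv_delta k c : convC (fun n => cs n (fun m => if Nat.eqb m k then c else RtoC 0)) c.
Proof.
  intros eps He. exists (S k). intros n Hn. rewrite cs_delta. destruct (Nat.ltb_spec k n); try lia.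
  replace (Cminus c c) with (RtoC 0) by ring. rewrite Cmod_0. auto.
Qed.
Lemma conv_zero : convC (fun n => cs n (fun _ => RtoC 0)) (RtoC 0).
Proof. intros eps He. exists O. intros n _. rewrite cs_zero. replace (Cminus (RtoC 0) (RtoC 0)) with (RtoC 0) by ring. rewrite Cmod_0; auto. Qed.

Lemma RIntC_ext f g : (forall t, f t = g t) -> RIntC f = RIntC g.
Proof. intros H. replace f with g; auto. apply functional_extensionality; auto. Qed.

Lemma Ip u p : RIntC (fun t => Cmult (cis (2 * u * cos t)) (cis (IZR p * t))) = Cmult (RtoC (2 * PI)) (cc u p).
Proof.
  destruct (generic 1 (fun th => th O) (fun th => cis (IZR p * th O)) u 1) as [sp [sn [Hsp [Hsn [_ [_ E]]]]]].
  - apply Lip_coord; lia.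
  - apply niceC_cis. apply Lip_scal. apply Lip_coord; lia.
  - intros; rewrite Cmod_cis; lra.
  - change (RIntC (fun t => Cmult (cis (2 * u * cos t)) (cis (IZR p * t)))) with
      (CI 1 (fun th => Cmult (cis (2 * u * cos (th O))) (cis (IZR p * th O)))).
    rewrite E.
    assert (Hg : forall m, CI 1 (fun th => Cmult (cis (IZR m * th O)) (cis (IZR p * th O))) =
                           if Z.eqb (m + p) 0 then RtoC (2 * PI) else RtoC 0).
    { intros m. change (CI 1 (fun th => Cmult (cis (IZR m * th O)) (cis (IZR p * th O)))) with
        (RIntC (fun t => Cmult (cis (IZR m * t)) (cis (IZR p * t)))).
      rewrite <- RIntC_cis. apply RIntC_ext. intros t. rewrite <- cis_add, plus_IZR. f_equal; ring. }
    cbv zeta in Hsp, Hsn.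
    destruct (Z.le_gt_cases p 0).
    + set (k := Z.to_nat (- p)).
      assert (Ep : convC (fun n => cs n (fun m => if Nat.eqb m k then Cmult (RtoC (2 * PI)) (cc u p) else RtoC 0)) sp).
      { eapply convC_ext. 2: exact Hsp. intros m. cbv beta. rewrite Hg.
        destruct (Nat.eqb_spec m k); destruct (Z.eqb_spec (Z.of_nat m + p) 0); try lia.
        - subst m. unfold k. rewrite Z2Nat.id by lia. rewrite cc_neg. ring.
        - ring. }
      assert (En : convC (fun n => cs n (fun _ => RtoC 0)) sn).
      { eapply convC_ext. 2: exact Hsn. intros n. cbv beta. rewrite Hg. destruct (Z.eqb_spec (- Z.of_nat (S n) + p) 0); try lia. ring. }
      rewrite (convC_unique _ _ _ En conv_zero), <- (convC_unique _ _ _ (conv_delta k _) Ep). ring.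
    + set (k := (Z.to_nat p - 1)%nat).
      assert (En : convC (fun n => cs n (fun m => if Nat.eqb m k then Cmult (RtoC (2 * PI)) (cc u p) else RtoC 0)) sn).
      { eapply convC_ext. 2: exact Hsn. intros n. cbv beta. rewrite Hg.
        destruct (Nat.eqb_spec n k); destruct (Z.eqb_spec (- Z.of_nat (S n) + p) 0); try lia.
        - replace (- Z.of_nat (S n))%Z with (- p)%Z by lia. rewrite cc_neg. ring.
        - ring. }
      assert (Ep : convC (fun n => cs n (fun _ => RtoC 0)) sp).
      { eapply convC_ext. 2: exact Hsp. intros m. cbv beta. rewrite Hg. destruct (Z.eqb_spec (Z.of_nat m + p) 0); try lia. ring. }
      rewrite (convC_unique _ _ _ Ep conv_zero), <- (convC_unique _ _ _ (conv_delta k _) En). ring.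
Qed.

Lemma cis_sumd d F : cis (sumd d F) = Cprodd d (fun l => cis (F l)).
Proof. induction d; simpl. apply cis_0. rewrite cis_add, IHd. auto. Qed.
Lemma sumd_lin d a th F : a * sumd d th + sumd d F = sumd d (fun l => a * th l + F l).
Proof. induction d; simpl. ring. rewrite <- IHd. ring. Qed.

Lemma Lip_sumd_gen d F : (forall l, exists K, 0 <= K /\ forall s t, Rabs (F l s - F l t) <= K * Rabs (s - t)) ->
  Lip d (fun th => sumd d (fun l => F l (th l))).
Proof.
  intros HF. assert (forall n, (n <= d)%nat -> Lip d (fun th => sumd n (fun l => F l (th l)))).
  { induction n; intros Hn; simpl. apply Lip_const. apply Lip_plus. apply IHn; lia.
    destruct (HF n) as [K [HK H]]. exists K. intros u v. eapply Rle_trans. apply H.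
    apply Rmult_le_compat_l; auto. apply dist_coord; lia. }
  apply H; lia.
Qed.
Lemma lip_lin_cos a c : exists K, 0 <= K /\ forall s t, Rabs ((a * s + c * cos s) - (a * t + c * cos t)) <= K * Rabs (s - t).
Proof.
  exists (Rabs a + Rabs c). split. pose proof (Rabs_pos a); pose proof (Rabs_pos c); lra.
  intros s t. replace (a * s + c * cos s - (a * t + c * cos t)) with (a * (s - t) + c * (cos s - cos t)) by ring.
  eapply Rle_trans. apply Rabs_triang. rewrite !Rabs_mult. pose proof (cos_lip s t).
  pose proof (Rabs_pos a); pose proof (Rabs_pos c). pose proof (Rabs_pos (s - t)).
  assert (Rabs c * Rabs (cos s - cos t) <= Rabs c * Rabs (s - t)) by (apply Rmult_le_compat_l; auto). nra.
Qed.
Lemma nice1_cis psi K : 0 <= K -> (forall s t, Rabs (psi s - psi t) <= K * Rabs (s - t)) -> nice1 (fun t => cis (psi t)).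
Proof.
  intros HK H. exists K, 1. intros s t. split. rewrite Cmod_cis; lra. simpl. split.
  eapply Rle_trans. apply cos_lip. auto. eapply Rle_trans. apply sin_lip. auto.
Qed.
Lemma nice1_ext f g : (forall t, f t = g t) -> nice1 f -> nice1 g.
Proof. intros H Hf. replace g with f; auto. apply functional_extensionality; auto. Qed.

Definition hfun (X : R) (y : nat -> R) (k : nat -> Z) (m : Z) (l : nat) (t : R) : C :=
  Cmult (cis (2 * (X * / y l) * cos t)) (cis (IZR (k l + m) * t)).

Lemma nice1_hfun X y k m l : nice1 (hfun X y k m l).
Proof.
  apply nice1_ext with (fun t => cis (IZR (k l + m) * t + 2 * (X * / y l) * cos t)).
  intros t. unfold hfun. rewrite cis_add. ring.
  destruct (lip_lin_cos (IZR (k l + m)) (2 * (X * / y l))) as [K [HK H]]. apply nice1_cis with K; auto.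
Qed.

Theorem main_thm (d : nat) (k : nat -> Z) (x : R) (y : nat -> R) (phi : R) :
  let a := fun m : Z =>
    Cmult (cis (IZR m * phi))
      (Cmult (j0 m (x * prodd d y))
             (Cprodd d (fun l => j0 (k l + m)%Z (x * / y l)))) in
  abs_summable_Z a /\
  exists s : C, is_sum_Z a s /\
    Jk d k y (2 * PI * x) phi = Cmult (Cdiv (RtoC 1) (RtoC (2 * PI))) s.
Proof.
  intros a. set (X := 2 * PI * x).
  set (om := fun th : nat -> R => sumd d th + phi).
  set (Hh := fun th : nat -> R => cis (sumd d (fun l => IZR (k l) * th l + 2 * X * / y l * cos (th l)))).
  set (u0 := X * prodd d y).
  assert (Hom : Lip d om) by apply Lip_sumd.
  assert (HH : niceC d Hh).
  { apply niceC_cis. apply (Lip_sumd_gen d (fun l s => IZR (k l) * s + 2 * X * / y l * cos s)).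
    intros l. apply lip_lin_cos. }
  destruct (generic d om Hh u0 1 Hom HH) as [sp [sn [Hsp [Hsn [Ap [An E]]]]]].
  { intros th. unfold Hh. rewrite Cmod_cis. lra. }
  set (g := fun m : Z => CI d (fun th => Cmult (cis (IZR m * om th)) (Hh th))) in *.
  assert (Hg : forall m, g m = Cmult (cis (IZR m * phi)) (Cprodd d (fun l => Cmult (RtoC (2 * PI)) (cc (X * / y l) (k l + m)%Z)))).
  { intros m. unfold g.
    rewrite (CI_ext d _ (fun th => Cmult (cis (IZR m * phi)) (Cprodd d (fun l => hfun X y k m l (th l))))).
    - rewrite CI_scal. rewrite CI_prod. f_equal. apply Cprodd_ext. intros l _. unfold hfun. apply Ip.
      intros; apply nice1_hfun. apply niceC_prod; auto. intros; apply nice1_hfun.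
    - intros th. unfold om, Hh. rewrite <- cis_add. 
      replace (IZR m * (sumd d th + phi) + sumd d (fun l => IZR (k l) * th l + 2 * X * / y l * cos (th l)))
        with (IZR m * phi + sumd d (fun l => IZR m * th l + (IZR (k l) * th l + 2 * X * / y l * cos (th l)))).
      2:{ rewrite <- sumd_lin. ring. }
      rewrite cis_add, cis_sumd. f_equal. apply Cprodd_ext. intros l _. unfold hfun. rewrite <- cis_add, plus_IZR.
      f_equal. ring. }
  assert (Ha : forall m, a m = Cmult (RtoC (2 * PI)) (Cmult (cc u0 m) (g m))).
  { intros m. unfold a. rewrite Hg.
    rewrite (Cprodd_ext d (fun l => j0 (k l + m) (x * / y l)) (fun l => Cmult (RtoC (2 * PI)) (cc (X * / y l) (k l + m)%Z))).
    unfold j0, cc. replace (4 * PI * (x * prodd d y)) with (2 * u0) by (unfold u0, X; ring).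
    ring. intros l _. unfold j0, cc. replace (4 * PI * (x * / y l)) with (2 * (X * / y l)) by (unfold X; ring). auto. }
  assert (H2PI : RtoC (2 * PI) <> RtoC 0). { intros H. injection H. pose proof PI_RGT_0. lra. }
  split.
  - split.
    + apply ex_series_ext with (fun n => 2 * PI * Cmod (Cmult (cc u0 (Z.of_nat n)) (g (Z.of_nat n)))).
      intros n. rewrite Ha, (Cmod_mult (RtoC (2 * PI))), Cmod_R, Rabs_right; auto. pose proof PI_RGT_0; lra.
      apply (ex_series_scal (V := R_NormedModule) (2 * PI)). auto.
    + apply ex_series_ext with (fun n => 2 * PI * Cmod (Cmult (cc u0 (- Z.of_nat (S n))%Z) (g (- Z.of_nat (S n))%Z))).
      intros n. rewrite Ha, (Cmod_mult (RtoC (2 * PI))), Cmod_R, Rabs_right; auto. pose proof PI_RGT_0; lra.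
      apply (ex_series_scal (V := R_NormedModule) (2 * PI)). auto.
  - exists (Cplus (Cmult (RtoC (2 * PI)) sp) (Cmult (RtoC (2 * PI)) sn)). split.
    + exists (Cmult (RtoC (2 * PI)) sp), (Cmult (RtoC (2 * PI)) sn). split; [|split; auto].
      * apply is_seriesC_conv. eapply convC_ext. 2: apply convC_scal; exact Hsp. intros n. rewrite Ha. auto.
      * apply is_seriesC_conv. eapply convC_ext. 2: apply convC_scal; exact Hsn. intros n. rewrite Ha. auto.
    + transitivity (Cplus sp sn).
      * rewrite <- E. change (Jk d k y X phi) with (CI d (fun th => cis (Theta d k th y X phi))).
        apply CI_ext. intros th. unfold Theta, om, Hh. rewrite cis_add. f_equal. f_equal. unfold u0. ring.
      * field. auto.
Qed.


Theorem lemma6p13 (d : nat) (k : nat -> Z) (x : R) (y : nat -> R) (phi : R) :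
  (1 <= d)%nat -> 0 < x -> (forall l, (l < d)%nat -> 0 < y l) ->
  let a := fun m : Z =>
    Cmult (cis (IZR m * phi))
      (Cmult (j0 m (x * prodd d y))
             (Cprodd d (fun l => j0 (k l + m)%Z (x * / y l)))) in
  abs_summable_Z a /\
  exists s : C, is_sum_Z a s /\
    Jk d k y (2 * PI * x) phi = Cmult (Cdiv (RtoC 1) (RtoC (2 * PI))) s.
Proof.
  intros _ _ _. exact (main_thm d k x y phi).
Qed.
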